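(* Let $(P,Q)=(p_1,\dots,p_N,q_1,\dots,q_N)$ be a global solution of the Cucker–Smale model with velocity control described in the context. Then: (1) The following three statements are equivalent: (a) $(P,Q)$ exhibits flocking, i.e. $\sup_{t\ge0}D_Q(t)<\infty$ and $\lim_{t\to\infty}D_P(t)=0$; (b) $D_P$ decays exponentially, i.e. there exist constants $B,C>0$ with $D_P(t)\le Be^{-Ct}$ for all $t\ge0$; (c) the agents are spatially bounded, i.e. $\sup_{t\ge0}D_Q(t)<\infty$. (2) If \[ \|P^0\|<\frac{\mathcal M\kappa}{M_{G'}}\int_{\|Q^0\|}^{+\infty}\psi(s)\,ds, \] then $(P,Q)$ exhibits flocking. In particular, if $\|\psi\|_{L^1(\mathbb R_+)}=\infty$, then flocking occurs for every initial datum.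
   Context: Let $N\ge1$, $d\ge1$, $\kappa>0$, and write $[N]=\{1,\dots,N\}$, $\mathbb R_+=(0,\infty)$, $\mathbb R_{\ge0}=[0,\infty)$. The velocity control function $G:\mathbb R^d\to\mathbb R^d$ is $G(p)=g(|p|)\,p/|p|$ for $p\neq0$ and $G(0)=0$, where $g\in C^1(\mathbb R_{\ge0})$, $g(0)=0$, on every compact interval $g'$ satisfies $0<m\le g'\le M$ for some constants $m,M$ (depending on the interval), and $g$ is convex or concave on $\mathbb R_+$. The communication kernel $\psi:\mathbb R_+\to\mathbb R_+$ is bounded, Lipschitz continuous, and nonincreasing ($(\psi(r)-\psi(s))(r-s)\le0$ for all $r,s$). The model is the system of ODEs, for $i\in[N]$ and $t>0$, \[ \dot q_i=G(p_i),\qquad \dot p_i=\frac{\kappa}{N}\sum_{k=1}^N\psi(|q_k-q_i|)\big(G(p_k)-G(p_i)\big),\qquad (q_i,p_i)(0)=(q_i^0,p_i^0)\in\mathbb R^d\times\mathbb R^d. \] Notation: $P^0=(p_1^0,\dots,p_N^0)$, $Q^0=(q_1^0,\dots,q_N^0)$; $\|Q\|^2=\sum_{i,j\in[N]}|q_i-q_j|^2$, $\|P\|^2=\sum_{i,j\in[N]}|p_i-p_j|^2$; $D_Q(t)=\max_{i,j}|q_i(t)-q_j(t)|$, $D_P(t)=\max_{i,j}|p_i(t)-p_j(t)|$; $P^0_M=\max_i|p_i^0|$, $M_{G'}=\max\{g'(r):0\le r\le P^0_M\}$, $m_{G'}=\min\{g'(r):0\le r\le P^0_M\}$, and $\mathcal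 M=\min\{m_{G'},\,m_{G'}^2/M_{G'}\}$. *)

(* Defs.v *)
From Stdlib Require Import Reals Lra.
From Coquelicot Require Import Coquelicot.
Open Scope R_scope.

Fixpoint rsum (n : nat) (f : nat -> R) : R :=
  match n with O => 0 | S m => rsum m f + f m end.

(* rmax n f = max(0, f 0, ..., f (n-1)); used only on nonnegative quantities *)
Fixpoint rmax (n : nat) (f : nat -> R) : R :=
  match n with O => 0 | S m => Rmax (rmax m f) (f m) end.

(* A vector of R^d is represented by its coordinates k < d. *)
Definition vec := nat -> R.
Definition vnorm (d : nat) (x : vec) : R := sqrt (rsum d (fun k => x k ^ 2)).
Definition vsub (x y : vec) : vec := fun k => x k - y k.

Definition Gvel (g : R -> R) (d : nat) (p : vec) : vec :=
  fun k => if Req_EM_T (vnorm d p) 0 then 0 else g (vnorm d p) * p k / vnorm d p.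

(* g in C^1(R_{>=0}) with derivative g' (one-sided at 0, obtained by continuity),
   g(0) = 0, g' bounded between positive constants on each compact interval,
   g convex or concave on R_+ *)
Definition convex_pos (g : R -> R) : Prop :=
  forall x y t, 0 < x -> 0 < y -> 0 <= t <= 1 ->
    g (t * x + (1 - t) * y) <= t * g x + (1 - t) * g y.
Definition concave_pos (g : R -> R) : Prop :=
  forall x y t, 0 < x -> 0 < y -> 0 <= t <= 1 ->
    t * g x + (1 - t) * g y <= g (t * x + (1 - t) * y).

Definition velocity_control (g g' : R -> R) : Prop :=
  g 0 = 0 /\
  (forall r, 0 < r -> is_derive g r (g' r)) /\
  (forall r, 0 < r -> continuous g' r) /\
  filterlim g (at_right 0) (locally (g 0)) /\
  filterlim g' (at_right 0) (locally (g' 0)) /\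
  (forall b, 0 <= b -> exists m M, 0 < m /\
     forall r, 0 <= r <= b -> m <= g' r <= M) /\
  (convex_pos g \/ concave_pos g).

(* psi bounded, Lipschitz, nonincreasing, positive; stated on [0,oo)
   (psi(0) is the continuous extension) *)
Definition comm_kernel (psi : R -> R) : Prop :=
  (forall r, 0 <= r -> 0 < psi r) /\
  (exists B, forall r, 0 <= r -> psi r <= B) /\
  (exists L, forall r s, 0 <= r -> 0 <= s -> Rabs (psi r - psi s) <= L * Rabs (r - s)) /\
  (forall r s, 0 <= r -> 0 <= s -> (psi r - psi s) * (r - s) <= 0).

Definition CS_force (N d : nat) (kappa : R) (g psi : R -> R)
    (q p : nat -> R -> vec) (i : nat) (t : R) (k : nat) : R :=
  kappa / INR N *
    rsum N (fun j => psi (vnorm d (vsub (q j t) (q i t))) *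
                     (Gvel g d (p j t) k - Gvel g d (p i t) k)).

Definition CS_solution (N d : nat) (kappa : R) (g psi : R -> R)
    (q p : nat -> R -> vec) : Prop :=
  forall i k, (i < N)%nat -> (k < d)%nat ->
    (forall t, 0 < t -> is_derive (fun s => q i s k) t (Gvel g d (p i t) k)) /\
    (forall t, 0 < t -> is_derive (fun s => p i s k) t (CS_force N d kappa g psi q p i t k)) /\
    filterlim (fun s => q i s k) (at_right 0) (locally (q i 0 k)) /\
    filterlim (fun s => p i s k) (at_right 0) (locally (p i 0 k)).

Definition DQ (N d : nat) (q : nat -> R -> vec) (t : R) : R :=
  rmax N (fun i => rmax N (fun j => vnorm d (vsub (q i t) (q j t)))).

Definition config_norm (N d : nat) (x : nat -> vec) : R :=
  sqrt (rsum N (fun i => rsum N (fun j => vnorm d (vsub (x i) (x j)) ^ 2))).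

Definition spatially_bounded (N d : nat) (q : nat -> R -> vec) : Prop :=
  exists B, forall t, 0 <= t -> DQ N d q t <= B.

Definition flocking (N d : nat) (q p : nat -> R -> vec) : Prop :=
  spatially_bounded N d q /\ is_lim (DQ N d p) p_infty 0.

Definition exp_decay (N d : nat) (p : nat -> R -> vec) : Prop :=
  exists B C, 0 < B /\ 0 < C /\ forall t, 0 <= t -> DQ N d p t <= B * exp (- C * t).

Definition improper_int (f : R -> R) (a : R) : Rbar :=
  Lim (fun x => RInt f a x) p_infty.

Definition sup_on (f : R -> R) (a : R) : R :=
  real (Lub_Rbar (fun y => exists r, 0 <= r <= a /\ y = f r)).
Definition inf_on (f : R -> R) (a : R) : R :=
  real (Glb_Rbar (fun y => exists r, 0 <= r <= a /\ y = f r)).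

(* Main.v *)
Require Import Defs.
From Stdlib Require Import Reals Lra Lia Psatz FunctionalExtensionality.
From Coquelicot Require Import Coquelicot.
Open Scope R_scope.


Lemma rsum_ext n f h : (forall k, (k < n)%nat -> f k = h k) -> rsum n f = rsum n h.
Proof. induction n; simpl; intros H; auto. rewrite IHn by (intros; apply H; lia). rewrite H by lia. auto. Qed.

Lemma rsum_plus n f h : rsum n (fun k => f k + h k) = rsum n f + rsum n h.
Proof. induction n; simpl; [lra|]. rewrite IHn; lra. Qed.

Lemma rsum_scal n c f : rsum n (fun k => c * f k) = c * rsum n f.
Proof. induction n; simpl; [lra|]. rewrite IHn; lra. Qed.

Lemma rsum_opp n f : rsum n (fun k => - f k) = - rsum n f.
Proof. induction n; simpl; [lra|]. rewrite IHn; lra. Qed.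

Lemma rsum_minus n f h : rsum n (fun k => f k - h k) = rsum n f - rsum n h.
Proof. induction n; simpl; [lra|]. rewrite IHn; lra. Qed.

Lemma rsum_const n c : rsum n (fun _ => c) = INR n * c.
Proof. induction n; simpl rsum; [simpl; lra|]. rewrite IHn, S_INR; lra. Qed.

Lemma rsum_le n f h : (forall k, (k < n)%nat -> f k <= h k) -> rsum n f <= rsum n h.
Proof. induction n; simpl; intros H; [lra|]. pose proof (H n ltac:(lia)).
 assert (rsum n f <= rsum n h) by (apply IHn; intros; apply H; lia). lra. Qed.

Lemma rsum_nonneg n f : (forall k, (k < n)%nat -> 0 <= f k) -> 0 <= rsum n f.
Proof. intros H. replace 0 with (rsum n (fun _ => 0)). apply rsum_le; auto.
 rewrite rsum_const; lra. Qed.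

Lemma rsum_ge_term n f i : (forall k, (k < n)%nat -> 0 <= f k) -> (i < n)%nat -> f i <= rsum n f.
Proof. induction n; simpl; intros H Hi; [lia|].
 assert (0 <= rsum n f) by (apply rsum_nonneg; intros; apply H; lia).
 destruct (Nat.eq_dec i n). subst; lra.
 assert (f i <= rsum n f) by (apply IHn; [intros; apply H; lia| lia]). pose proof (H n ltac:(lia)). lra. Qed.

Lemma rsum_swap n m f : rsum n (fun i => rsum m (fun j => f i j)) = rsum m (fun j => rsum n (fun i => f i j)).
Proof. induction n; simpl.
 - rewrite rsum_const; simpl; lra.
 - rewrite IHn. rewrite <- rsum_plus. auto. Qed.

Lemma rsum_zero_terms n f : (forall k, (k < n)%nat -> 0 <= f k) -> rsum n f = 0 -> forall k, (k < n)%nat -> f k = 0.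
Proof. intros H0 Hs k Hk. pose proof (rsum_ge_term n f k H0 Hk). pose proof (H0 k Hk). lra. Qed.

Lemma rsum_antisym n a : (forall i j, (i < n)%nat -> (j < n)%nat -> a j i = - a i j) ->
  rsum n (fun i => rsum n (fun j => a i j)) = 0.
Proof. intros H. assert (E: rsum n (fun i => rsum n (fun j => a i j)) = - rsum n (fun i => rsum n (fun j => a i j))).
 { rewrite (rsum_swap n n a) at 1. rewrite <- rsum_opp. apply rsum_ext; intros j Hj. rewrite <- rsum_opp. apply rsum_ext; intros i Hi.
   rewrite (H i j); auto; lra. }
 lra. Qed.

Lemma rsum_symmetrize n a : rsum n (fun i => rsum n (fun j => a i j)) =
  / 2 * rsum n (fun i => rsum n (fun j => a i j + a j i)).
Proof. assert (rsum n (fun i => rsum n (fun j => a i j + a j i)) = 2 * rsum n (fun i => rsum n (fun j => a i j))).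
 { rewrite (rsum_ext n _ (fun i => rsum n (fun j => a i j) + rsum n (fun j => a j i))) by (intros; apply rsum_plus).
   rewrite rsum_plus. rewrite (rsum_swap n n (fun i j => a j i)). lra. }
 rewrite H; lra. Qed.

Lemma rmax_ge n f i : (i < n)%nat -> f i <= rmax n f.
Proof. induction n; simpl; intros Hi; [lia|]. destruct (Nat.eq_dec i n). subst; apply Rmax_r.
 eapply Rle_trans; [apply IHn; lia| apply Rmax_l]. Qed.

Lemma rmax_nonneg n f : 0 <= rmax n f.
Proof. induction n; simpl; [lra|]. eapply Rle_trans; [apply IHn| apply Rmax_l]. Qed.

Lemma rmax_le n f B : 0 <= B -> (forall i, (i < n)%nat -> f i <= B) -> rmax n f <= B.
Proof. induction n; simpl; intros HB H; auto. apply Rmax_lub. apply IHn; auto. apply H; lia. Qed.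

Lemma rmax_mono n f h : (forall i, (i < n)%nat -> f i <= h i) -> rmax n f <= rmax n h.
Proof. intros H. apply rmax_le. apply rmax_nonneg. intros. eapply Rle_trans. apply H; auto. apply rmax_ge; auto. Qed.

Lemma argmax n (v : nat -> R) : (1 <= n)%nat -> exists i, (i < n)%nat /\ forall j, (j < n)%nat -> v j <= v i.
Proof. induction n; intros H; [lia|]. destruct n.
 - exists 0%nat; split; [lia|]. intros j Hj; assert (j = 0%nat) by lia; subst; lra.
 - destruct IHn as [i [Hi Hv]]; [lia|]. destruct (Rle_dec (v (S n)) (v i)).
   + exists i; split; [lia|]. intros j Hj. destruct (Nat.eq_dec j (S n)); [subst; auto| apply Hv; lia].
   + exists (S n); split; [lia|]. intros j Hj. destruct (Nat.eq_dec j (S n)); [subst; lra|].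
     pose proof (Hv j ltac:(lia)); lra. Qed.

Lemma ball_R (x e y : R) : ball x e y <-> Rabs (y - x) < e.
Proof. reflexivity. Qed.

Lemma mono_int a b (f df : R -> R) : (forall t, a < t <= b -> is_derive f t (df t)) ->
  (forall t, a < t <= b -> df t <= 0) -> filterlim f (at_right a) (locally (f a)) ->
  forall x y, a <= x -> x <= y -> y <= b -> f y <= f x.
Proof.
  intros Hd Hn Hc.
  assert (Hpos: forall x y, a < x -> x <= y -> y <= b -> f y <= f x).
  { intros x y Hx Hxy Hy.
    destruct (MVT_gen f x y df) as [c [Hc1 Hc2]].
    - intros z Hz. rewrite Rmin_left in Hz by lra. rewrite Rmax_right in Hz by lra. apply Hd; lra.
    - intros z Hz. rewrite Rmin_left in Hz by lra. rewrite Rmax_right in Hz by lra.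
      apply continuity_pt_filterlim. apply (ex_derive_continuous (K:=R_AbsRing) (V:=R_NormedModule) f z). eexists; apply Hd; lra.
    - rewrite Rmin_left in Hc1 by lra. rewrite Rmax_right in Hc1 by lra.
      assert (df c <= 0) by (apply Hn; lra). nra. }
  intros x y Hx Hxy Hy. destruct (Rle_lt_or_eq_dec a x Hx) as [Hax|Hax]; [apply Hpos; auto|].
  subst x. destruct (Rle_lt_or_eq_dec a y Hxy) as [Hay|Hay]; [|subst; lra].
  destruct (Rle_dec (f y) (f a)) as [|Hne]; auto. exfalso.
  assert (He: 0 < f y - f a) by lra.
  apply (proj1 (filterlim_locally _ _)) with (eps := mkposreal _ He) in Hc.
  destruct Hc as [del Hdel]. simpl in Hdel.
  set (x' := a + Rmin del (y - a) / 2).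
  assert (Hm1 : 0 < Rmin del (y - a)) by (apply Rmin_glb_lt; [apply cond_pos| lra]).
  assert (Hm2 : Rmin del (y - a) <= del) by apply Rmin_l.
  assert (Hm3 : Rmin del (y - a) <= y - a) by apply Rmin_r.
  assert (H1: ball (f a) (f y - f a) (f x')).
  { apply Hdel. apply ball_R. unfold x'. rewrite Rabs_right by lra. lra. unfold x'; lra. }
  assert (f y <= f x') by (apply Hpos; unfold x'; lra).
  change (Rabs (f x' - f a) < f y - f a) in H1. apply Rabs_lt_between in H1. lra.
Qed.

Section FL.
Context {T : Type} {F : (T -> Prop) -> Prop} {FF : Filter F}.

Lemma fl_plus (f h : T -> R) a b : filterlim f F (locally a) -> filterlim h F (locally b) ->
  filterlim (fun x => f x + h x) F (locally (a + b)).
Proof. intros Hf Hh. eapply filterlim_comp_2; eauto. apply (filterlim_plus (V:=R_NormedModule) a b). Qed.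

Lemma fl_mult (f h : T -> R) a b : filterlim f F (locally a) -> filterlim h F (locally b) ->
  filterlim (fun x => f x * h x) F (locally (a * b)).
Proof. intros Hf Hh. eapply filterlim_comp_2; eauto. apply (filterlim_mult (K:=R_AbsRing) a b). Qed.

Lemma fl_const (c : R) : filterlim (fun _ => c) F (locally c).
Proof. apply filterlim_const. Qed.

Lemma fl_cont (f : T -> R) (h : R -> R) a : filterlim f F (locally a) -> continuous h a ->
  filterlim (fun x => h (f x)) F (locally (h a)).
Proof. intros Hf Hh. eapply filterlim_comp; eauto. Qed.

Lemma fl_opp (f : T -> R) a : filterlim f F (locally a) -> filterlim (fun x => - f x) F (locally (- a)).
Proof. intros Hf. replace (fun x => - f x) with (fun x => (-1) * f x) by (apply functional_extensionality; intros; ring).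
 replace (-a) with ((-1) * a) by ring. apply fl_mult; auto. apply fl_const. Qed.

Lemma fl_minus (f h : T -> R) a b : filterlim f F (locally a) -> filterlim h F (locally b) ->
  filterlim (fun x => f x - h x) F (locally (a - b)).
Proof. intros Hf Hh. apply fl_plus; auto. apply fl_opp; auto. Qed.

Lemma fl_pow2 (f : T -> R) a : filterlim f F (locally a) -> filterlim (fun x => f x ^ 2) F (locally (a ^ 2)).
Proof. intros Hf. replace (fun x => f x ^ 2) with (fun x => f x * f x) by (apply functional_extensionality; intros; ring).
 replace (a^2) with (a * a) by ring. apply fl_mult; auto. Qed.

Lemma fl_rsum n (f : nat -> T -> R) (a : nat -> R) : (forall k, (k < n)%nat -> filterlim (f k) F (locally (a k))) ->
  filterlim (fun x => rsum n (fun k => f k x)) F (locally (rsum n a)).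
Proof. induction n; intros H; simpl. apply fl_const. apply fl_plus. apply IHn; intros; apply H; lia. apply H; lia. Qed.
End FL.

Lemma fl_id_right a : filterlim (fun x => x) (at_right a) (locally a).
Proof. intros P HP. apply filter_le_within. exact HP. Qed.

Lemma is_derive_rsum n (f : nat -> R -> R) (df : nat -> R) t :
  (forall k, (k < n)%nat -> is_derive (f k) t (df k)) ->
  is_derive (fun s => rsum n (fun k => f k s)) t (rsum n df).
Proof. induction n; intros H; simpl.
 - apply (is_derive_const (K:=R_AbsRing) (V:=R_NormedModule)).
 - apply (is_derive_plus (K:=R_AbsRing) (V:=R_NormedModule)). apply IHn; intros; apply H; lia. apply H; lia. Qed.

Definition nsq d (x : vec) := rsum d (fun k => x k ^ 2).
Definition ip d (x y : vec) := rsum d (fun k => x k * y k).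

Lemma nsq_nonneg d x : 0 <= nsq d x.
Proof. apply rsum_nonneg; intros; apply pow2_ge_0. Qed.

Lemma vnorm_nonneg d x : 0 <= vnorm d x.
Proof. apply sqrt_pos. Qed.

Lemma vnorm_sq d x : vnorm d x ^ 2 = nsq d x.
Proof. unfold vnorm. rewrite pow2_sqrt; [reflexivity| apply nsq_nonneg]. Qed.

Lemma vnorm_eq d x : vnorm d x = sqrt (nsq d x).
Proof. reflexivity. Qed.

Lemma nsq_zero d x : nsq d x = 0 -> forall k, (k < d)%nat -> x k = 0.
Proof. intros H k Hk. pose proof (rsum_zero_terms d (fun k => x k ^ 2) ltac:(intros; apply pow2_ge_0) H k Hk).
 simpl in H0. nra. Qed.

Lemma vnorm_zero d x : vnorm d x = 0 -> forall k, (k < d)%nat -> x k = 0.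
Proof. intros H. apply nsq_zero. rewrite <- vnorm_sq, H. ring. Qed.

Lemma coord_le d x k : (k < d)%nat -> Rabs (x k) <= vnorm d x.
Proof. intros Hk. rewrite <- sqrt_Rsqr_abs. apply sqrt_le_1_alt. unfold Rsqr.
 pose proof (rsum_ge_term d (fun k => x k ^ 2) k ltac:(intros; apply pow2_ge_0) Hk). simpl in H. unfold nsq. simpl. lra. Qed.

Lemma ip_expand d x y a b : nsq d (fun k => a * x k + b * y k) = a^2 * nsq d x + 2 * a * b * ip d x y + b^2 * nsq d y.
Proof. unfold nsq, ip. rewrite (rsum_ext d _ (fun k => a^2 * x k ^ 2 + (2*a*b * (x k * y k) + b^2 * y k ^ 2))) by (intros; ring).
 rewrite !rsum_plus, !rsum_scal. ring. Qed.

Lemma CS d x y : ip d x y <= vnorm d x * vnorm d y.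
Proof.
  set (a := vnorm d x). set (b := vnorm d y).
  pose proof (ip_expand d x y b (-a)) as E.
  pose proof (nsq_nonneg d (fun k => b * x k + - a * y k)) as P.
  assert (Ha: nsq d x = a^2) by (symmetry; apply vnorm_sq).
  assert (Hb: nsq d y = b^2) by (symmetry; apply vnorm_sq).
  rewrite Ha, Hb in E. assert (a0: 0 <= a) by apply vnorm_nonneg. assert (b0: 0 <= b) by apply vnorm_nonneg.
  destruct (Rle_lt_or_eq_dec 0 a a0) as [Hap|Ha0].
  - destruct (Rle_lt_or_eq_dec 0 b b0) as [Hbp|Hb0].
    + assert (0 <= 2 * a * b * (a * b - ip d x y)) by nra.
      assert (0 < 2 * a * b) by nra. nra.
    + assert (ip d x y = 0). { unfold ip. rewrite (rsum_ext d _ (fun _ => 0)). rewrite rsum_const; ring.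
        intros k Hk. rewrite (vnorm_zero d y (eq_sym Hb0) k Hk). ring. }
      rewrite H, <- Hb0. lra.
  - assert (ip d x y = 0). { unfold ip. rewrite (rsum_ext d _ (fun _ => 0)). rewrite rsum_const; ring.
        intros k Hk. rewrite (vnorm_zero d x (eq_sym Ha0) k Hk). ring. }
    rewrite H, <- Ha0. lra.
Qed.

Lemma nsq_sym d x y : nsq d (vsub x y) = nsq d (vsub y x).
Proof. unfold nsq, vsub. apply rsum_ext; intros; ring. Qed.

Lemma vnorm_sym d x y : vnorm d (vsub x y) = vnorm d (vsub y x).
Proof. unfold vnorm. f_equal. apply nsq_sym. Qed.

Lemma nsq_sub d x y : nsq d (vsub x y) = nsq d x + nsq d y - 2 * ip d x y.
Proof. unfold nsq, ip, vsub. rewrite (rsum_ext d _ (fun k => x k ^ 2 + (y k ^ 2 + (-2) * (x k * y k)))) by (intros; ring).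
 rewrite !rsum_plus, !rsum_scal. ring. Qed.

Lemma is_derive_lin (c t : R) : is_derive (fun r => c * r) t c.
Proof. auto_derive; auto. ring. Qed.

Section GFacts.
Variables (g g' : R -> R) (d : nat).
Hypothesis Hg0 : g 0 = 0.
Hypothesis Hgd : forall r, 0 < r -> is_derive g r (g' r).
Hypothesis Hgc : filterlim g (at_right 0) (locally (g 0)).

Lemma g_lip Rb m M : (forall r, 0 <= r <= Rb -> m <= g' r <= M) ->
  forall x y, 0 <= x -> x <= y -> y <= Rb -> m * (y - x) <= g y - g x <= M * (y - x).
Proof.
  intros Hb x y Hx Hxy Hy. split.
  - pose proof (mono_int 0 Rb (fun r => m * r - g r) (fun r => m - g' r)) as H.
    assert (m * y - g y <= m * x - g x); [|lra].
    apply H; auto.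
    + intros t Ht. apply (is_derive_minus (K:=R_AbsRing) (V:=R_NormedModule)); [|apply Hgd; lra].
      apply is_derive_lin.
    + intros t Ht. pose proof (Hb t ltac:(lra)). lra.
    + apply fl_minus. apply fl_mult. apply fl_const. apply fl_id_right. exact Hgc.
  - pose proof (mono_int 0 Rb (fun r => g r - M * r) (fun r => g' r - M)) as H.
    assert (g y - M * y <= g x - M * x); [|lra].
    apply H; auto.
    + intros t Ht. apply (is_derive_minus (K:=R_AbsRing) (V:=R_NormedModule)); [apply Hgd; lra|].
      apply is_derive_lin.
    + intros t Ht. pose proof (Hb t ltac:(lra)). lra.
    + apply fl_minus. exact Hgc. apply fl_mult. apply fl_const. apply fl_id_right.
Qed.

Variables (Rb m M : R).
Hypothesis Hm : 0 < m.
Hypothesis Hb : forall r, 0 <= r <= Rb -> m <= g' r <= M.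

Lemma Gscale p : vnorm d p <= Rb -> exists u, m <= u <= M /\ g (vnorm d p) = u * vnorm d p /\
  forall k, (k < d)%nat -> Gvel g d p k = u * p k.
Proof.
  intros Hp. pose proof (vnorm_nonneg d p).
  destruct (Req_EM_T (vnorm d p) 0) as [E|E].
  - exists m. split. pose proof (Hb 0 ltac:(lra)); lra. split. rewrite E, Hg0; ring.
    intros k Hk. unfold Gvel. destruct (Req_EM_T (vnorm d p) 0); [|contradiction].
    rewrite (vnorm_zero d p E k Hk). ring.
  - assert (Hp0: 0 < vnorm d p) by lra.
    pose proof (g_lip Rb m M Hb 0 (vnorm d p) ltac:(lra) ltac:(lra) Hp) as L. rewrite Hg0 in L.
    exists (g (vnorm d p) / vnorm d p). split; [split|split].
    + apply Rmult_le_reg_r with (vnorm d p); auto. field_simplify; lra.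
    + apply Rmult_le_reg_r with (vnorm d p); auto. field_simplify; lra.
    + field; lra.
    + intros k Hk. unfold Gvel. destruct (Req_EM_T (vnorm d p) 0); [contradiction|]. field; lra.
Qed.

Lemma g_diff_sq a b : 0 <= a <= Rb -> 0 <= b <= Rb ->
  (a - b) * (g a - g b - m * (a - b)) >= 0 /\ (g a - g b) ^ 2 <= M ^ 2 * (a - b) ^ 2.
Proof. intros Ha Hb'. destruct (Rle_dec a b).
  - pose proof (g_lip Rb m M Hb a b ltac:(lra) ltac:(lra) ltac:(lra)). split. nra.
    assert (0 <= g b - g a) by nra. nra.
  - pose proof (g_lip Rb m M Hb b a ltac:(lra) ltac:(lra) ltac:(lra)). split. nra.
    assert (0 <= g a - g b) by nra. nra.
Qed.

Lemma G_mono p q : vnorm d p <= Rb -> vnorm d q <= Rb ->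
  m * nsq d (vsub p q) <= rsum d (fun k => (p k - q k) * (Gvel g d p k - Gvel g d q k)).
Proof.
  intros Hp Hq. destruct (Gscale p Hp) as [u [Hu [Ga Gp]]]. destruct (Gscale q Hq) as [v [Hv [Gb Gq]]].
  rewrite (rsum_ext d _ (fun k => u * p k ^ 2 + (v * q k ^ 2 + (-(u+v)) * (p k * q k)))).
  2:{ intros k Hk. rewrite Gp, Gq by auto. ring. }
  rewrite !rsum_plus, !rsum_scal. fold (nsq d p) (nsq d q) (ip d p q). rewrite nsq_sub.
  rewrite <- !vnorm_sq. pose proof (CS d p q). set (a := vnorm d p) in *. set (b := vnorm d q) in *.
  set (c := ip d p q) in *. assert (0 <= a) by apply vnorm_nonneg. assert (0 <= b) by apply vnorm_nonneg.
  destruct (g_diff_sq a b ltac:(lra) ltac:(lra)) as [K1 _]. rewrite Ga, Gb in K1.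
  assert (K2: 0 <= (u + v - 2 * m) * (a * b - c)) by (apply Rmult_le_pos; lra).
  assert (u * a ^ 2 + (v * b ^ 2 + - (u + v) * c) - m * (a ^ 2 + b ^ 2 - 2 * c) =
     (a - b) * (u * a - v * b - m * (a - b)) + (u + v - 2 * m) * (a * b - c)) by ring. lra.
Qed.

Lemma G_lip p q : vnorm d p <= Rb -> vnorm d q <= Rb ->
  nsq d (vsub (Gvel g d p) (Gvel g d q)) <= M ^ 2 * nsq d (vsub p q).
Proof.
  intros Hp Hq. destruct (Gscale p Hp) as [u [Hu [Ga Gp]]]. destruct (Gscale q Hq) as [v [Hv [Gb Gq]]].
  unfold nsq at 1, vsub at 1.
  rewrite (rsum_ext d _ (fun k => u^2 * p k ^ 2 + (v^2 * q k ^ 2 + (-(2*u*v)) * (p k * q k)))).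
  2:{ intros k Hk. rewrite Gp, Gq by auto. ring. }
  rewrite !rsum_plus, !rsum_scal. fold (nsq d p) (nsq d q) (ip d p q). rewrite nsq_sub.
  rewrite <- !vnorm_sq. pose proof (CS d p q). set (a := vnorm d p) in *. set (b := vnorm d q) in *.
  set (c := ip d p q) in *. assert (0 <= a) by apply vnorm_nonneg. assert (0 <= b) by apply vnorm_nonneg.
  destruct (g_diff_sq a b ltac:(lra) ltac:(lra)) as [_ K1]. rewrite Ga, Gb in K1.
  assert (0 <= M^2 - u * v) by nra.
  assert (K2: 0 <= (M^2 - u * v) * (a * b - c)) by (apply Rmult_le_pos; lra).
  assert (M ^ 2 * (a ^ 2 + b ^ 2 - 2 * c) - (u ^ 2 * a ^ 2 + (v ^ 2 * b ^ 2 + - (2 * u * v) * c)) =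
     (M^2 * (a - b)^2 - (u * a - v * b)^2) + 2 * ((M^2 - u * v) * (a * b - c))) by ring. lra.
Qed.

Lemma G_lip_norm p q : vnorm d p <= Rb -> vnorm d q <= Rb ->
  vnorm d (vsub (Gvel g d p) (Gvel g d q)) <= M * vnorm d (vsub p q).
Proof. intros Hp Hq. pose proof (G_lip p q Hp Hq).
  assert (0 <= M) by (pose proof (Hb 0); pose proof (vnorm_nonneg d p); assert (m <= M) by (apply Rle_trans with (g' 0); apply Hb; lra); lra).
  rewrite vnorm_eq, vnorm_eq. rewrite <- (sqrt_pow2 M) by auto. rewrite <- sqrt_mult by (try apply pow2_ge_0; apply nsq_nonneg).
  apply sqrt_le_1_alt. auto. Qed.

Lemma G_max p q : vnorm d q <= vnorm d p -> vnorm d p <= Rb ->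
  ip d p (Gvel g d q) <= ip d p (Gvel g d p).
Proof.
  intros Hqp Hp. destruct (Gscale p Hp) as [u [Hu [Ga Gp]]]. destruct (Gscale q ltac:(lra)) as [v [Hv [Gb Gq]]].
  unfold ip. rewrite (rsum_ext d _ (fun k => v * (p k * q k))) by (intros; rewrite Gq by auto; ring).
  rewrite (rsum_ext d (fun k => p k * Gvel g d p k) (fun k => u * p k ^ 2)) by (intros; rewrite Gp by auto; ring).
  rewrite !rsum_scal. fold (ip d p q) (nsq d p). rewrite <- vnorm_sq. pose proof (CS d p q).
  set (a := vnorm d p) in *. set (b := vnorm d q) in *. set (c := ip d p q) in *.
  assert (0 <= a) by apply vnorm_nonneg. assert (0 <= b) by apply vnorm_nonneg.
  pose proof (g_lip Rb m M Hb b a ltac:(lra) ltac:(lra) ltac:(lra)).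
  assert (v * c <= v * (a * b)) by (apply Rmult_le_compat_l; lra).
  assert (a * (g b) <= a * g a) by (apply Rmult_le_compat_l; nra).
  rewrite Ga, Gb in *. nra.
Qed.
End GFacts.

Lemma is_derive_sq (f : R -> R) t df : is_derive f t df -> is_derive (fun s => f s ^ 2) t (2 * f t * df).
Proof. intros H. pose proof (is_derive_pow f 2 t df H). simpl in H0. replace (2 * f t * df) with (INR 2 * df * (f t ^ 1)).
 exact H0. simpl; ring. Qed.

Lemma fin_choice n (P : nat -> R -> Prop) : (forall j, (j < n)%nat -> exists t, P j t) ->
  exists tau : nat -> R, forall j, (j < n)%nat -> P j (tau j).
Proof. induction n; intros H. exists (fun _ => 0); intros; lia.
 destruct IHn as [tau Ht]. intros; apply H; lia. destruct (H n ltac:(lia)) as [tn Htn].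
 exists (fun j => if Nat.eq_dec j n then tn else tau j). intros j Hj. destruct (Nat.eq_dec j n). subst; auto. apply Ht; lia. Qed.

Lemma filter_forall_fin {T} {F : (T -> Prop) -> Prop} {FF : Filter F} n (P : nat -> T -> Prop) :
  (forall j, (j < n)%nat -> F (P j)) -> F (fun s => forall j, (j < n)%nat -> P j s).
Proof. induction n; intros H. apply filter_imp with (fun _ => True); [intros; lia| apply filter_true].
 apply filter_imp with (fun s => (forall j, (j < n)%nat -> P j s) /\ P n s).
 intros s [H1 H2] j Hj. destruct (Nat.eq_dec j n); [subst; auto| apply H1; lia].
 apply filter_and. apply IHn; intros; apply H; lia. apply H; lia. Qed.

Lemma deriv_neg_left (h : R -> R) x l a : is_derive h x l -> l < 0 -> a < x -> exists s, a <= s < x /\ h x < h s.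
Proof.
  intros Hd Hl Ha. apply is_derive_Reals in Hd.
  destruct (Hd (- l / 2) ltac:(lra)) as [del Hdel].
  set (hh := - Rmin (del / 2) (x - a)).
  assert (H1: 0 < Rmin (del / 2) (x - a)) by (apply Rmin_glb_lt; [pose proof (cond_pos del); lra| lra]).
  assert (H2: Rmin (del / 2) (x - a) <= del / 2) by apply Rmin_l.
  assert (H3: Rmin (del / 2) (x - a) <= x - a) by apply Rmin_r.
  assert (Hpos := cond_pos del).
  specialize (Hdel hh ltac:(unfold hh; lra)). assert (Rabs hh < del) by (unfold hh; rewrite Rabs_left by lra; lra).
  specialize (Hdel H). apply Rabs_lt_between in Hdel.
  exists (x + hh). split. unfold hh; lra.
  destruct Hdel as [_ Hdel]. assert ((h (x + hh) - h x) / hh < 0) by lra.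
  assert (hh < 0) by (unfold hh; lra).
  assert (0 < h (x + hh) - h x); [|lra].
  replace (h (x + hh) - h x) with (((h (x + hh) - h x) / hh) * hh) by (field; lra). nra.
Qed.

Lemma max_principle n (f df : nat -> R -> R) : (1 <= n)%nat ->
  (forall i t, (i < n)%nat -> 0 < t -> is_derive (f i) t (df i t)) ->
  (forall i t, (i < n)%nat -> 0 < t -> (forall j, (j < n)%nat -> f j t <= f i t) -> df i t <= 0) ->
  (forall i, (i < n)%nat -> filterlim (f i) (at_right 0) (locally (f i 0))) ->
  forall t, 0 <= t -> forall i, (i < n)%nat -> f i t <= rmax n (fun j => f j 0).
Proof.
  intros Hn Hd Hneg Hc T HT i Hi.
  destruct (Rle_lt_or_eq_dec 0 T HT) as [HTp|HT0]; [|subst; apply (rmax_ge n (fun j => f j 0) i Hi)].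
  assert (Sa: forall del eps, 0 < del <= T -> 0 < eps -> f i T <= eps * T + rmax n (fun j => f j del)).
  { intros del eps Hdel Heps.
    set (h := fun j t => f j t - eps * t).
    assert (Hh: forall j, (j < n)%nat -> exists tj, (forall c, del <= c <= T -> h j c <= h j tj) /\ del <= tj <= T).
    { intros j Hj. apply continuity_ab_maj. lra. intros c Hc'. apply continuity_pt_filterlim.
      apply (ex_derive_continuous (K:=R_AbsRing) (V:=R_NormedModule) (h j) c).
      eexists. unfold h. apply (is_derive_minus (K:=R_AbsRing) (V:=R_NormedModule)). apply Hd; auto; lra. apply is_derive_lin. }
    destruct (fin_choice n _ Hh) as [tau Htau].
    destruct (argmax n (fun j => h j (tau j)) Hn) as [i0 [Hi0 Hmax]].
    assert (Hall: forall j s, (j < n)%nat -> del <= s <= T -> h j s <= h i0 (tau i0)).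
    { intros j s Hj Hs. eapply Rle_trans. apply (proj1 (Htau j Hj)); auto. apply Hmax; auto. }
    destruct (Htau i0 Hi0) as [_ Hti0].
    assert (Hteq: tau i0 = del).
    { destruct (Rle_lt_or_eq_dec del (tau i0) (proj1 Hti0)) as [Hlt|]; auto. exfalso.
      set (ts := tau i0) in *.
      assert (Hdf: df i0 ts <= 0).
      { apply Hneg; auto; try lra. intros j Hj. pose proof (Hall j ts Hj ltac:(lra)). unfold h in H. lra. }
      assert (Hder: is_derive (h i0) ts (df i0 ts - eps * 1)).
      { unfold h. apply (is_derive_minus (K:=R_AbsRing) (V:=R_NormedModule)). apply Hd; auto; lra.
        replace (eps * 1) with eps by ring. apply is_derive_lin. }
      destruct (deriv_neg_left (h i0) ts _ del Hder ltac:(lra) Hlt) as [s [Hs1 Hs2]].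
      pose proof (Hall i0 s Hi0 ltac:(lra)). lra. }
    pose proof (Hall i T Hi ltac:(lra)). rewrite Hteq in H. unfold h in H.
    pose proof (rmax_ge n (fun j => f j del) i0 Hi0). simpl in H0. nra. }
  assert (Sb: forall del, 0 < del <= T -> f i T <= rmax n (fun j => f j del)).
  { intros del Hdel. apply Rle_plus_epsilon. intros eps Heps.
    pose proof (Sa del (eps / T) Hdel ltac:(apply Rdiv_lt_0_compat; lra)).
    replace (eps / T * T) with eps in H by (field; lra). lra. }
  apply Rle_plus_epsilon. intros eta Heta.
  assert (Hev: at_right 0 (fun s => forall j, (j < n)%nat -> ball (f j 0) eta (f j s))).
  { apply filter_forall_fin. intros j Hj. apply (proj1 (filterlim_locally (f j) (f j 0)) (Hc j Hj) (mkposreal eta Heta)). }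
  destruct Hev as [del0 Hdel0].
  set (s := Rmin (del0 / 2) T).
  assert (0 < s) by (apply Rmin_glb_lt; [pose proof (cond_pos del0); lra| lra]).
  assert (s <= del0 / 2) by apply Rmin_l. assert (s <= T) by apply Rmin_r.
  assert (Hs: forall j, (j < n)%nat -> ball (f j 0) eta (f j s)).
  { apply Hdel0; [| lra]. apply ball_R. rewrite Rminus_0_r, Rabs_right by lra. pose proof (cond_pos del0); lra. }
  eapply Rle_trans. apply (Sb s); lra.
  apply rmax_le. pose proof (rmax_nonneg n (fun j => f j 0)); lra.
  intros j Hj. specialize (Hs j Hj). change (Rabs (f j s - f j 0) < eta) in Hs. apply Rabs_lt_between in Hs.
  pose proof (rmax_ge n (fun j => f j 0) j Hj). simpl in H2. lra.
Qed.

Lemma nsq_derive d (X : R -> vec) (DX : vec) t : (forall k, (k < d)%nat -> is_derive (fun s => X s k) t (DX k)) ->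
  is_derive (fun s => nsq d (X s)) t (2 * ip d (X t) DX).
Proof. intros H. unfold nsq, ip. rewrite <- rsum_scal.
  rewrite (rsum_ext d (fun k => 2 * (X t k * DX k)) (fun k => 2 * X t k * DX k)) by (intros; ring).
  apply (is_derive_rsum d (fun k s => X s k ^ 2) (fun k => 2 * X t k * DX k)).
  intros k Hk. apply is_derive_sq. auto. Qed.

Lemma nsq_fl d (X : R -> vec) (X0 : vec) : (forall k, (k < d)%nat -> filterlim (fun s => X s k) (at_right 0) (locally (X0 k))) ->
  filterlim (fun s => nsq d (X s)) (at_right 0) (locally (nsq d X0)).
Proof. intros H. unfold nsq. apply (fl_rsum d (fun k s => X s k ^ 2) (fun k => X0 k ^ 2)). intros. apply fl_pow2; auto. Qed.

Lemma force_identity N d (c : R) (x G : nat -> vec) (w : nat -> nat -> R) :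
  (1 <= N)%nat -> (forall i j, (i < N)%nat -> (j < N)%nat -> w i j = w j i) ->
  let F := fun i => (fun k => c / INR N * rsum N (fun j => w i j * (G j k - G i k))) : vec in
  rsum N (fun i => rsum N (fun j => ip d (vsub (x i) (x j)) (vsub (F i) (F j)))) =
  - c * rsum N (fun i => rsum N (fun j => w i j * ip d (vsub (x i) (x j)) (vsub (G i) (G j)))).
Proof.
  intros HN Hw F.
  assert (SF: forall k, rsum N (fun j => F j k) = 0).
  { intros k. unfold F. rewrite rsum_scal. rewrite rsum_antisym. ring.
    intros i j Hi Hj. rewrite Hw by auto. ring. }
  assert (Z: forall i, rsum N (fun j => ip d (x i) (F j)) = 0).
  { intros i. unfold ip. rewrite rsum_swap. rewrite (rsum_ext d _ (fun k => x i k * rsum N (fun j => F j k))).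
    rewrite (rsum_ext d _ (fun _ => 0)). rewrite rsum_const; ring. intros; rewrite SF; ring.
    intros; rewrite <- rsum_scal; auto. }
  assert (S1: rsum N (fun i => rsum N (fun j => ip d (vsub (x i) (x j)) (vsub (F i) (F j)))) =
     2 * INR N * rsum N (fun i => ip d (x i) (F i))).
  { rewrite (rsum_ext N _ (fun i => (rsum N (fun _ => ip d (x i) (F i)) + rsum N (fun j => ip d (x j) (F j)))
                                   - (rsum N (fun j => ip d (x i) (F j)) + rsum N (fun j => ip d (x j) (F i))))).
    2:{ intros i Hi. rewrite <- !rsum_plus, <- rsum_minus. apply rsum_ext; intros j Hj. unfold ip, vsub.
        rewrite <- !rsum_plus, <- rsum_minus. apply rsum_ext; intros; ring. }
    rewrite rsum_minus, !rsum_plus. rewrite (rsum_ext N (fun i => rsum N (fun j => ip d (x i) (F j))) (fun _ => 0)) by (intros; apply Z).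
    rewrite (rsum_swap N N (fun i j => ip d (x j) (F i))).
    rewrite (rsum_ext N (fun j => rsum N (fun i => ip d (x j) (F i))) (fun _ => 0)) by (intros; apply Z).
    rewrite (rsum_ext N (fun i => rsum N (fun _ => ip d (x i) (F i))) (fun i => INR N * ip d (x i) (F i))) by (intros; apply rsum_const).
    rewrite rsum_scal, !rsum_const. ring. }
  assert (S2: forall i, ip d (x i) (F i) = c / INR N * rsum N (fun j => w i j * rsum d (fun k => x i k * (G j k - G i k)))).
  { intros i. unfold ip. transitivity (c / INR N * rsum d (fun k => rsum N (fun j => w i j * (x i k * (G j k - G i k))))).
    - rewrite <- rsum_scal. apply rsum_ext; intros k Hk. unfold F.
      replace (x i k * (c / INR N * rsum N (fun j => w i j * (G j k - G i k)))) with
        (c / INR N * (x i k * rsum N (fun j => w i j * (G j k - G i k)))) by ring.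
      f_equal. rewrite <- rsum_scal. apply rsum_ext; intros; ring.
    - f_equal. rewrite rsum_swap. apply rsum_ext; intros j Hj. rewrite <- rsum_scal. apply rsum_ext; intros; ring. }
  assert (S3: rsum N (fun i => rsum N (fun j => w i j * rsum d (fun k => x i k * (G j k - G i k)))) =
     - / 2 * rsum N (fun i => rsum N (fun j => w i j * ip d (vsub (x i) (x j)) (vsub (G i) (G j))))).
  { rewrite rsum_symmetrize. match goal with |- _ * ?A = _ * ?B => replace A with (-B); [ring|] end.
    rewrite <- rsum_opp. apply rsum_ext; intros i Hi. rewrite <- rsum_opp. apply rsum_ext; intros j Hj.
    rewrite (Hw j i) by auto. unfold ip, vsub. rewrite <- !rsum_scal, <- rsum_plus, <- rsum_opp. apply rsum_ext; intros; ring. }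
  rewrite S1. rewrite (rsum_ext N _ _ (fun i _ => S2 i)). rewrite rsum_scal. rewrite S3.
  assert (INR N <> 0) by (apply not_0_INR; lia). field. auto.
Qed.

Section PsiFacts.
Variable psi : R -> R.
Hypothesis Hpp : forall r, 0 <= r -> 0 < psi r.
Variable L Bp : R.
Hypothesis HL : forall r s, 0 <= r -> 0 <= s -> Rabs (psi r - psi s) <= L * Rabs (r - s).
Hypothesis HBp : forall r, 0 <= r -> psi r <= Bp.

Definition psit x := psi (Rmax 0 x).
Definition Psi x := RInt psit 0 x.

Lemma Rmax0_lip x y : Rabs (Rmax 0 y - Rmax 0 x) <= Rabs (y - x).
Proof. unfold Rmax. destruct (Rle_dec 0 y), (Rle_dec 0 x); apply Rabs_le_between;
  pose proof (Rle_abs (y - x)); pose proof (Rabs_maj2 (y - x)); lra. Qed.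

Lemma L_nonneg : 0 <= L.
Proof. pose proof (HL 0 1 ltac:(lra) ltac:(lra)). 
  replace (Rabs (0 - 1)) with 1 in H by (rewrite Rabs_left by lra; ring). pose proof (Rabs_pos (psi 0 - psi 1)). lra. Qed.

Lemma psit_cont x : continuous psit x.
Proof.
  apply (proj2 (filterlim_locally _ _)). intros eps.
  pose proof L_nonneg. assert (Hd: 0 < eps / (L + 1)) by (apply Rdiv_lt_0_compat; [apply cond_pos| lra]).
  exists (mkposreal _ Hd). intros y Hy. change (Rabs (y - x) < eps / (L + 1)) in Hy.
  change (Rabs (psit y - psit x) < eps). unfold psit.
  eapply Rle_lt_trans. apply HL; apply Rmax_l.
  eapply Rle_lt_trans. apply Rmult_le_compat_l. auto. apply Rmax0_lip.
  pose proof (Rabs_pos (y - x)). pose proof (cond_pos eps).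
  assert (Rabs (y - x) * (L + 1) < eps).
  { apply Rmult_lt_reg_r with (/ (L + 1)). apply Rinv_0_lt_compat; lra.
    replace (Rabs (y - x) * (L + 1) * / (L + 1)) with (Rabs (y - x)) by (field; lra). auto. }
  nra.
Qed.

Lemma psit_pos x : 0 < psit x.
Proof. apply Hpp. apply Rmax_l. Qed.
Lemma psit_le x : psit x <= Bp.
Proof. apply HBp. apply Rmax_l. Qed.
Lemma psit_eq x : 0 <= x -> psit x = psi x.
Proof. intros. unfold psit. rewrite Rmax_right; auto. Qed.

Lemma psit_ex a b : ex_RInt psit a b.
Proof. apply (ex_RInt_continuous (V:=R_CompleteNormedModule)). intros; apply psit_cont. Qed.

Lemma Psi_derive x : is_derive Psi x (psit x).
Proof. apply (is_derive_RInt psit Psi 0 x). apply filter_forall. intros y. apply (RInt_correct (V:=R_CompleteNormedModule)). apply psit_ex.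
  apply psit_cont. Qed.

Lemma Psi_cont x : continuous Psi x.
Proof. apply (ex_derive_continuous (K:=R_AbsRing) (V:=R_NormedModule)). eexists; apply Psi_derive. Qed.

Lemma Psi_diff x y : Psi y - Psi x = RInt psit x y.
Proof. unfold Psi. rewrite <- (RInt_Chasles psit 0 x y) by apply psit_ex. simpl. unfold plus; simpl. ring. Qed.

Lemma RInt_psit_bounds x y : x <= y -> 0 <= RInt psit x y <= Bp * (y - x).
Proof. intros Hxy. split.
  - replace 0 with (RInt (fun _ => 0) x y). apply RInt_le; auto. apply ex_RInt_const. apply psit_ex.
    intros; left; apply psit_pos. rewrite RInt_const. unfold scal; simpl; unfold mult; simpl. ring.
  - replace (Bp * (y - x)) with (RInt (fun _ => Bp) x y). apply RInt_le; auto. apply psit_ex. apply ex_RInt_const.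
    intros; apply psit_le. rewrite RInt_const. unfold scal; simpl; unfold mult; simpl. ring.
Qed.

Lemma Psi_mono x y : x <= y -> Psi x <= Psi y.
Proof. intros H. pose proof (Psi_diff x y). pose proof (RInt_psit_bounds x y H). lra. Qed.

Lemma Psi_lip x y : x <= y -> Psi y - Psi x <= Bp * (y - x).
Proof. intros H. pose proof (Psi_diff x y). pose proof (RInt_psit_bounds x y H). lra. Qed.

Lemma RInt_psi_psit a x : 0 <= a -> 0 <= x -> RInt psi a x = RInt psit a x.
Proof. intros Ha Hx. apply RInt_ext. intros y Hy. assert (0 <= y). { pose proof (Rmin_glb a x 0). unfold Rmin in Hy. destruct (Rle_dec a x); lra. }
  symmetry; apply psit_eq; auto. Qed.
End PsiFacts.

Section Dyn.
Variables (N d : nat) (kappa : R) (g g' psi : R -> R) (q p : nat -> R -> vec).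
Hypothesis HN : (1 <= N)%nat.
Hypothesis Hkap : 0 < kappa.
Hypothesis Hg0 : g 0 = 0.
Hypothesis Hgd : forall r, 0 < r -> is_derive g r (g' r).
Hypothesis Hgc : filterlim g (at_right 0) (locally (g 0)).
Hypothesis Hgb : forall b, 0 <= b -> exists m M, 0 < m /\ forall r, 0 <= r <= b -> m <= g' r <= M.
Hypothesis Hpp : forall r, 0 <= r -> 0 < psi r.
Hypothesis Hpm : forall r s, 0 <= r -> 0 <= s -> (psi r - psi s) * (r - s) <= 0.
Hypothesis Hsol : CS_solution N d kappa g psi q p.
Variables (Lpsi Bp : R).
Hypothesis HL : forall r s, 0 <= r -> 0 <= s -> Rabs (psi r - psi s) <= Lpsi * Rabs (r - s).
Hypothesis HBp : forall r, 0 <= r -> psi r <= Bp.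

Definition Fv i t : vec := fun k => CS_force N d kappa g psi q p i t k.
Definition w i j t := psi (vnorm d (vsub (q j t) (q i t))).
Definition Gv (x : vec) : vec := fun k => Gvel g d x k.

Lemma psi_anti r s : 0 <= r -> r <= s -> psi s <= psi r.
Proof. intros Hr Hrs. destruct (Rle_lt_or_eq_dec r s Hrs). pose proof (Hpm r s Hr ltac:(lra)). nra. subst; lra. Qed.

Lemma w_sym i j t : w i j t = w j i t.
Proof. unfold w. rewrite vnorm_sym. auto. Qed.

Lemma w_pos i j t : 0 < w i j t.
Proof. unfold w. apply Hpp. apply vnorm_nonneg. Qed.

Lemma INR_N_pos : 0 < INR N.
Proof. apply lt_0_INR; lia. Qed.

Lemma ip_force x i t : ip d x (Fv i t) =
  kappa / INR N * rsum N (fun j => w i j t * (ip d x (Gv (p j t)) - ip d x (Gv (p i t)))).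
Proof. unfold ip, Fv, CS_force. fold (w i). transitivity (kappa / INR N * rsum d (fun k => rsum N (fun j => w i j t * (x k * Gvel g d (p j t) k - x k * Gvel g d (p i t) k)))).
  - rewrite <- (rsum_scal d (kappa / INR N)). apply rsum_ext; intros k Hk.
    rewrite Rmult_comm, Rmult_assoc. f_equal. rewrite Rmult_comm, <- (rsum_scal N (x k)). apply rsum_ext; intros; unfold w; ring.
  - f_equal. rewrite rsum_swap. apply rsum_ext; intros j Hj. unfold Gv. rewrite <- rsum_minus, <- rsum_scal. apply rsum_ext; intros; ring.
Qed.

Lemma dq i k t : (i < N)%nat -> (k < d)%nat -> 0 < t -> is_derive (fun s => q i s k) t (Gvel g d (p i t) k).
Proof. intros; apply (Hsol i k); auto. Qed.
Lemma dp i k t : (i < N)%nat -> (k < d)%nat -> 0 < t -> is_derive (fun s => p i s k) t (Fv i t k).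
Proof. intros; apply (Hsol i k); auto. Qed.
Lemma cq i k : (i < N)%nat -> (k < d)%nat -> filterlim (fun s => q i s k) (at_right 0) (locally (q i 0 k)).
Proof. intros; apply (Hsol i k); auto. Qed.
Lemma cp i k : (i < N)%nat -> (k < d)%nat -> filterlim (fun s => p i s k) (at_right 0) (locally (p i 0 k)).
Proof. intros; apply (Hsol i k); auto. Qed.

Definition P0M := rmax N (fun i => vnorm d (p i 0)).

Lemma MP : forall t, 0 <= t -> forall i, (i < N)%nat -> vnorm d (p i t) <= P0M.
Proof.
  intros t Ht i Hi.
  assert (H: nsq d (p i t) <= rmax N (fun j => nsq d (p j 0))).
  { apply (max_principle N (fun i t => nsq d (p i t)) (fun i t => 2 * ip d (p i t) (Fv i t))); auto.
    - intros i0 t0 Hi0 Ht0. apply nsq_derive. intros; apply dp; auto.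
    - intros i0 t0 Hi0 Ht0 Hmax. assert (ip d (p i0 t0) (Fv i0 t0) <= 0); [|lra].
      rewrite ip_force. assert (0 < kappa / INR N) by (apply Rdiv_lt_0_compat; auto; apply INR_N_pos).
      destruct (Hgb (vnorm d (p i0 t0)) (vnorm_nonneg _ _)) as [m [M [Hm HmM]]].
      assert (rsum N (fun j => w i0 j t0 * (ip d (p i0 t0) (Gv (p j t0)) - ip d (p i0 t0) (Gv (p i0 t0)))) <= 0).
      { replace 0 with (rsum N (fun _ => 0)) by (rewrite rsum_const; ring). apply rsum_le. intros j Hj.
        pose proof (w_pos i0 j t0).
        assert (ip d (p i0 t0) (Gv (p j t0)) <= ip d (p i0 t0) (Gv (p i0 t0))).
        { unfold Gv. apply (G_max g g' d Hg0 Hgd Hgc (vnorm d (p i0 t0)) m M Hm HmM); [|lra].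
          rewrite !vnorm_eq. apply sqrt_le_1_alt. apply Hmax; auto. }
        nra. }
      nra.
    - intros i0 Hi0. apply nsq_fl. intros; apply cp; auto. }
  assert (H2: rmax N (fun j => nsq d (p j 0)) <= P0M ^ 2).
  { apply rmax_le. apply pow2_ge_0. intros j Hj. rewrite <- vnorm_sq. pose proof (vnorm_nonneg d (p j 0)).
    pose proof (rmax_ge N (fun i => vnorm d (p i 0)) j Hj). unfold P0M. simpl in H1. nra. }
  rewrite vnorm_eq. assert (0 <= P0M) by apply rmax_nonneg. rewrite <- (sqrt_pow2 P0M) by auto.
  apply sqrt_le_1_alt. lra.
Qed.

Lemma is_derive_mult_R (f h : R -> R) t a b : is_derive f t a -> is_derive h t b ->
  is_derive (fun s => f s * h s) t (a * h t + f t * b).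
Proof. intros Hf Hh. pose proof (is_derive_mult f h t a b Hf Hh) as H. simpl in H.
  replace (a * h t + f t * b) with (plus (mult a (h t)) (mult (f t) b)). apply H. intros; apply Rmult_comm.
  reflexivity. Qed.

Lemma is_derive_eq (f : R -> R) t a b : is_derive f t a -> a = b -> is_derive f t b.
Proof. intros H ->; auto. Qed.

Lemma sqrt_comp_derive (f : R -> R) s a : is_derive f s a -> 0 < f s -> is_derive (fun x => sqrt (f x)) s (a / (2 * sqrt (f s))).
Proof. intros Hf Hp. assert (Hs: is_derive sqrt (f s) (/ (2 * sqrt (f s)))) by (apply is_derive_Reals; apply derivable_pt_lim_sqrt; auto).
  pose proof (is_derive_comp sqrt f s _ _ Hs Hf). eapply is_derive_eq. apply H. reflexivity. Qed.

Lemma plus_const_derive (f : R -> R) s a e : is_derive f s a -> is_derive (fun x => f x + e) s a.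
Proof. intros Hf. eapply is_derive_eq. apply (is_derive_plus (K:=R_AbsRing) (V:=R_NormedModule)). apply Hf.
  apply (is_derive_const (K:=R_AbsRing) (V:=R_NormedModule)). simpl. unfold plus, zero; simpl. ring. Qed.

Lemma Psi_comp_derive (f : R -> R) s a : is_derive f s a -> is_derive (fun x => Psi psi (f x)) s (a * psit psi (f s)).
Proof. intros Hf. assert (Hs: is_derive (Psi psi) (f s) (psit psi (f s))) by (eapply Psi_derive; eauto).
  pose proof (is_derive_comp (Psi psi) f s _ _ Hs Hf). eapply is_derive_eq. apply H. reflexivity. Qed.

Definition EP t := rsum N (fun i => rsum N (fun j => nsq d (vsub (p i t) (p j t)))).
Definition EQ t := rsum N (fun i => rsum N (fun j => nsq d (vsub (q i t) (q j t)))).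

Lemma EP_nonneg t : 0 <= EP t.
Proof. apply rsum_nonneg; intros; apply rsum_nonneg; intros; apply nsq_nonneg. Qed.
Lemma EQ_nonneg t : 0 <= EQ t.
Proof. apply rsum_nonneg; intros; apply rsum_nonneg; intros; apply nsq_nonneg. Qed.

Lemma EP_term i j t : (i < N)%nat -> (j < N)%nat -> nsq d (vsub (p i t) (p j t)) <= EP t.
Proof. intros Hi Hj. unfold EP. eapply Rle_trans; [|apply (rsum_ge_term N _ i)]; auto.
  apply (rsum_ge_term N (fun j => nsq d (vsub (p i t) (p j t))) j); auto. intros; apply nsq_nonneg.
  intros; apply rsum_nonneg; intros; apply nsq_nonneg. Qed.
Lemma EQ_term i j t : (i < N)%nat -> (j < N)%nat -> nsq d (vsub (q i t) (q j t)) <= EQ t.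
Proof. intros Hi Hj. unfold EQ. eapply Rle_trans; [|apply (rsum_ge_term N _ i)]; auto.
  apply (rsum_ge_term N (fun j => nsq d (vsub (q i t) (q j t))) j); auto. intros; apply nsq_nonneg.
  intros; apply rsum_nonneg; intros; apply nsq_nonneg. Qed.

Lemma DQ_le_sqrt (x : nat -> R -> vec) t E : (forall i j, (i < N)%nat -> (j < N)%nat -> nsq d (vsub (x i t) (x j t)) <= E) ->
  DQ N d x t <= sqrt E.
Proof. intros H. unfold DQ. apply rmax_le. apply sqrt_pos. intros i Hi. apply rmax_le. apply sqrt_pos.
  intros j Hj. rewrite vnorm_eq. apply sqrt_le_1_alt. auto. Qed.

Lemma vnorm_le_DQ (x : nat -> R -> vec) t i j : (i < N)%nat -> (j < N)%nat -> vnorm d (vsub (x i t) (x j t)) <= DQ N d x t.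
Proof. intros Hi Hj. unfold DQ. eapply Rle_trans; [|apply (rmax_ge N _ i Hi)].
  apply (rmax_ge N (fun j => vnorm d (vsub (x i t) (x j t))) j Hj). Qed.

Lemma EP_fl : filterlim EP (at_right 0) (locally (EP 0)).
Proof. unfold EP. apply (fl_rsum N (fun i s => rsum N (fun j => nsq d (vsub (p i s) (p j s))))). intros i Hi.
  apply (fl_rsum N (fun j s => nsq d (vsub (p i s) (p j s)))). intros j Hj.
  apply (nsq_fl d (fun s => vsub (p i s) (p j s))). intros k Hk. unfold vsub. apply fl_minus; apply cp; auto. Qed.

Lemma EQ_fl : filterlim EQ (at_right 0) (locally (EQ 0)).
Proof. unfold EQ. apply (fl_rsum N (fun i s => rsum N (fun j => nsq d (vsub (q i s) (q j s))))). intros i Hi.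
  apply (fl_rsum N (fun j s => nsq d (vsub (q i s) (q j s)))). intros j Hj.
  apply (nsq_fl d (fun s => vsub (q i s) (q j s))). intros k Hk. unfold vsub. apply fl_minus; apply cq; auto. Qed.

Definition dEP t := 2 * rsum N (fun i => rsum N (fun j => ip d (vsub (p i t) (p j t)) (vsub (Fv i t) (Fv j t)))).
Definition dEQ t := 2 * rsum N (fun i => rsum N (fun j => ip d (vsub (q i t) (q j t)) (vsub (Gv (p i t)) (Gv (p j t))))).

Lemma EP_derive t : 0 < t -> is_derive EP t (dEP t).
Proof. intros Ht. unfold EP, dEP. eapply is_derive_eq.
  apply (is_derive_rsum N (fun i s => rsum N (fun j => nsq d (vsub (p i s) (p j s))))
     (fun i => rsum N (fun j => 2 * ip d (vsub (p i t) (p j t)) (vsub (Fv i t) (Fv j t))))).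
  intros i Hi. apply (is_derive_rsum N (fun j s => nsq d (vsub (p i s) (p j s)))).
  intros j Hj. apply (nsq_derive d (fun s => vsub (p i s) (p j s))). intros k Hk. unfold vsub.
  apply (is_derive_minus (K:=R_AbsRing) (V:=R_NormedModule)); apply dp; auto.
  rewrite <- rsum_scal. apply rsum_ext; intros. apply rsum_scal. Qed.

Lemma EQ_derive t : 0 < t -> is_derive EQ t (dEQ t).
Proof. intros Ht. unfold EQ, dEQ. eapply is_derive_eq.
  apply (is_derive_rsum N (fun i s => rsum N (fun j => nsq d (vsub (q i s) (q j s))))
     (fun i => rsum N (fun j => 2 * ip d (vsub (q i t) (q j t)) (vsub (Gv (p i t)) (Gv (p j t)))))).
  intros i Hi. apply (is_derive_rsum N (fun j s => nsq d (vsub (q i s) (q j s)))).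
  intros j Hj. apply (nsq_derive d (fun s => vsub (q i s) (q j s))). intros k Hk. unfold vsub.
  apply (is_derive_minus (K:=R_AbsRing) (V:=R_NormedModule)); apply dq; auto.
  rewrite <- rsum_scal. apply rsum_ext; intros. apply rsum_scal. Qed.

Section WithBounds.
Variables (m M : R).
Hypothesis Hm : 0 < m.
Hypothesis Hb : forall r, 0 <= r <= P0M -> m <= g' r <= M.

Lemma M_nonneg : 0 <= M.
Proof. assert (0 <= P0M) by apply rmax_nonneg. pose proof (Hb 0 ltac:(lra)). lra. Qed.

Lemma EP_dissip t psi0 : 0 < t -> 0 <= psi0 -> (forall i j, (i < N)%nat -> (j < N)%nat -> psi0 <= w i j t) ->
  dEP t <= - 2 * kappa * m * psi0 * EP t.
Proof.
  intros Ht H0 Hw. unfold dEP.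
  assert (Id: rsum N (fun i => rsum N (fun j => ip d (vsub (p i t) (p j t)) (vsub (Fv i t) (Fv j t)))) =
     - kappa * rsum N (fun i => rsum N (fun j => w i j t * ip d (vsub (p i t) (p j t)) (vsub (Gv (p i t)) (Gv (p j t)))))).
  { exact (force_identity N d kappa (fun i => p i t) (fun i => Gv (p i t)) (fun i j => w i j t) HN
           (fun i j _ _ => w_sym i j t)). }
  rewrite Id.
  assert (m * psi0 * EP t <= rsum N (fun i => rsum N (fun j => w i j t * ip d (vsub (p i t) (p j t)) (vsub (Gv (p i t)) (Gv (p j t)))))).
  { unfold EP. rewrite <- rsum_scal. apply rsum_le; intros i Hi. rewrite <- rsum_scal. apply rsum_le; intros j Hj.
    pose proof (G_mono g g' d Hg0 Hgd Hgc P0M m M Hm Hb (p i t) (p j t) (MP t ltac:(lra) i Hi) (MP t ltac:(lra) j Hj)) as G1.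
    change (rsum d (fun k => (p i t k - p j t k) * (Gvel g d (p i t) k - Gvel g d (p j t) k))) with
       (ip d (vsub (p i t) (p j t)) (vsub (Gv (p i t)) (Gv (p j t)))) in G1.
    pose proof (nsq_nonneg d (vsub (p i t) (p j t))). pose proof (Hw i j Hi Hj).
    assert (0 <= m * nsq d (vsub (p i t) (p j t))) by nra. nra. }
  nra.
Qed.

Lemma exp_decay_of_bounded : spatially_bounded N d q -> exp_decay N d p.
Proof.
  intros [BQ HBQ].
  assert (HBQ0: 0 <= BQ) by (eapply Rle_trans; [apply rmax_nonneg| apply (HBQ 0); lra]).
  set (psi0 := psi BQ). assert (Hp0: 0 < psi0) by (apply Hpp; auto).
  set (c := kappa * m * psi0). assert (Hc: 0 < c) by (unfold c; repeat apply Rmult_lt_0_compat; auto).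
  assert (Hphi: forall T, 0 <= T -> EP T * exp (2 * c * T) <= EP 0 * exp (2 * c * 0)).
  { intros T HT. apply (mono_int 0 T (fun s => EP s * exp (2 * c * s))
       (fun s => dEP s * exp (2 * c * s) + EP s * (2 * c * exp (2 * c * s)))); try lra.
    - intros s Hs. apply (is_derive_mult_R EP (fun s => exp (2 * c * s))). apply EP_derive; lra. auto_derive; auto. ring.
    - intros s Hs. assert (dEP s <= - 2 * kappa * m * psi0 * EP s).
      { apply EP_dissip; try lra. intros i j Hi Hj. unfold w, psi0. apply psi_anti. apply vnorm_nonneg.
        eapply Rle_trans; [apply vnorm_le_DQ; auto|]. apply HBQ; lra. }
      pose proof (exp_pos (2 * c * s)). unfold c in *. nra.
    - apply fl_mult. apply EP_fl. apply fl_cont. apply fl_mult. apply fl_const. apply fl_id_right. apply continuous_exp. }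
  exists (sqrt (EP 0) + 1), c. split. pose proof (sqrt_pos (EP 0)); lra. split; auto.
  intros t Ht. specialize (Hphi t Ht). rewrite Rmult_0_r, exp_0, Rmult_1_r in Hphi.
  assert (HE: EP t <= (sqrt (EP 0) * exp (- c * t)) ^ 2).
  { assert (E1: exp (2 * c * t) * (exp (- c * t) * exp (- c * t)) = 1).
    { rewrite <- !exp_plus. replace (2 * c * t + (- c * t + - c * t)) with 0 by ring. apply exp_0. }
    assert (E2: (sqrt (EP 0) * exp (- c * t)) ^ 2 = EP 0 * (exp (- c * t) * exp (- c * t))).
    { replace ((sqrt (EP 0) * exp (- c * t)) ^ 2) with ((sqrt (EP 0) * sqrt (EP 0)) * (exp (- c * t) * exp (- c * t))) by ring.
      rewrite sqrt_sqrt; auto. apply EP_nonneg. }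
    rewrite E2. pose proof (exp_pos (- c * t)). pose proof (EP_nonneg t).
    assert (0 <= exp (- c * t) * exp (- c * t)) by nra.
    replace (EP t) with (EP t * exp (2 * c * t) * (exp (- c * t) * exp (- c * t))) by (rewrite Rmult_assoc, E1; ring).
    apply Rmult_le_compat_r; auto. }
  eapply Rle_trans. apply (DQ_le_sqrt p t (EP t)). intros; apply EP_term; auto.
  eapply Rle_trans. apply sqrt_le_1_alt. apply HE. rewrite sqrt_pow2.
  pose proof (exp_pos (- c * t)). nra. pose proof (exp_pos (- c * t)). pose proof (sqrt_pos (EP 0)). nra.
Qed.

Lemma Gdiff_bound i j k s B C : (i < N)%nat -> (j < N)%nat -> (k < d)%nat -> 0 < s ->
  DQ N d p s <= B * exp (- C * s) ->
  Rabs (Gvel g d (p i s) k - Gvel g d (p j s) k) <= M * B * exp (- C * s).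
Proof. intros Hi Hj Hk Hs Hd.
  pose proof (coord_le d (vsub (Gvel g d (p i s)) (Gvel g d (p j s))) k Hk) as H1. unfold vsub at 1 in H1.
  pose proof (G_lip_norm g g' d Hg0 Hgd Hgc P0M m M Hm Hb (p i s) (p j s) (MP s ltac:(lra) i Hi) (MP s ltac:(lra) j Hj)) as H2.
  pose proof (vnorm_le_DQ p s i j Hi Hj) as H3. pose proof M_nonneg.
  assert (M * vnorm d (vsub (p i s) (p j s)) <= M * (B * exp (- C * s))) by (apply Rmult_le_compat_l; lra). lra. Qed.

Lemma exp_term_derive K C s : is_derive (fun s => K * exp (- C * s)) s (K * (- C * exp (- C * s))).
Proof. auto_derive; auto. ring. Qed.

Lemma exp_term_fl K C : filterlim (fun s => K * exp (- C * s)) (at_right 0) (locally (K * exp (- C * 0))).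
Proof. apply fl_mult. apply fl_const. apply fl_cont. apply fl_mult. apply fl_const. apply fl_id_right. apply continuous_exp. Qed.

Lemma bounded_of_exp_decay : exp_decay N d p -> spatially_bounded N d q.
Proof.
  intros [B [C [HB [HC Hdec]]]].
  set (K := M * B / C). assert (HK: 0 <= K) by (unfold K; pose proof M_nonneg; apply Rmult_le_pos; [nra| left; apply Rinv_0_lt_compat; auto]).
  assert (HKC: K * C = M * B) by (unfold K; field; lra).
  assert (Hco: forall i j k t, (i < N)%nat -> (j < N)%nat -> (k < d)%nat -> 0 <= t ->
     Rabs (q i t k - q j t k) <= Rabs (q i 0 k - q j 0 k) + K).
  { intros i j k t Hi Hj Hk Ht.
    assert (U: (q i t k - q j t k) + K * exp (- C * t) <= (q i 0 k - q j 0 k) + K * exp (- C * 0)).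
    { apply (mono_int 0 t (fun s => (q i s k - q j s k) + K * exp (- C * s))
        (fun s => (Gvel g d (p i s) k - Gvel g d (p j s) k) + K * (- C * exp (- C * s)))); try lra.
      - intros s Hs. apply (is_derive_plus (K:=R_AbsRing) (V:=R_NormedModule)).
        apply (is_derive_minus (K:=R_AbsRing) (V:=R_NormedModule)); apply dq; auto; lra. apply exp_term_derive.
      - intros s Hs. pose proof (Gdiff_bound i j k s B C Hi Hj Hk ltac:(lra) (Hdec s ltac:(lra))).
        apply Rabs_le_between in H. pose proof (exp_pos (- C * s)). nra.
      - apply fl_plus. apply fl_minus; apply cq; auto. apply exp_term_fl. }
    assert (L: - (q i t k - q j t k) + K * exp (- C * t) <= - (q i 0 k - q j 0 k) + K * exp (- C * 0)).
    { apply (mono_int 0 t (fun s => - (q i s k - q j s k) + K * exp (- C * s))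
        (fun s => - (Gvel g d (p i s) k - Gvel g d (p j s) k) + K * (- C * exp (- C * s)))); try lra.
      - intros s Hs. apply (is_derive_plus (K:=R_AbsRing) (V:=R_NormedModule)).
        apply (is_derive_opp (K:=R_AbsRing) (V:=R_NormedModule)).
        apply (is_derive_minus (K:=R_AbsRing) (V:=R_NormedModule)); apply dq; auto; lra. apply exp_term_derive.
      - intros s Hs. pose proof (Gdiff_bound i j k s B C Hi Hj Hk ltac:(lra) (Hdec s ltac:(lra))).
        apply Rabs_le_between in H. pose proof (exp_pos (- C * s)). nra.
      - apply fl_plus. apply fl_opp. apply fl_minus; apply cq; auto. apply exp_term_fl. }
    rewrite Rmult_0_r, exp_0 in U, L. pose proof (exp_pos (- C * t)).
    assert (0 <= K * exp (- C * t)) by nra.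
    pose proof (Rle_abs (q i 0 k - q j 0 k)). pose proof (Rabs_maj2 (q i 0 k - q j 0 k)).
    apply Rabs_le_between. lra. }
  set (bd := fun i j => rsum d (fun k => (Rabs (q i 0 k - q j 0 k) + K) ^ 2)).
  exists (rmax N (fun i => rmax N (fun j => sqrt (bd i j)))).
  intros t Ht. unfold DQ. apply rmax_mono; intros i Hi. apply rmax_mono; intros j Hj.
  rewrite vnorm_eq. apply sqrt_le_1_alt. unfold nsq, bd. apply rsum_le; intros k Hk.
  unfold vsub. pose proof (Hco i j k t Hi Hj Hk Ht). rewrite <- (pow2_abs (q i t k - q j t k)).
  pose proof (Rabs_pos (q i t k - q j t k)). nra.
Qed.

Lemma double_CS n (a b : nat -> nat -> R) : rsum n (fun i => rsum n (fun j => a i j * b i j)) <=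
  sqrt (rsum n (fun i => rsum n (fun j => a i j ^ 2))) * sqrt (rsum n (fun i => rsum n (fun j => b i j ^ 2))).
Proof.
  eapply Rle_trans; [apply rsum_le; intros i Hi; apply (CS n (a i) (b i))|].
  eapply Rle_trans; [apply (CS n (fun i => vnorm n (a i)) (fun i => vnorm n (b i)))|].
  assert (E: forall c : nat -> nat -> R, vnorm n (fun i => vnorm n (c i)) = sqrt (rsum n (fun i => rsum n (fun j => c i j ^ 2)))).
  { intros c. unfold vnorm at 1. f_equal. apply rsum_ext; intros. apply vnorm_sq. }
  rewrite !E. lra.
Qed.

Lemma dEQ_bound t : 0 < t -> dEQ t <= 2 * M * sqrt (EQ t) * sqrt (EP t).
Proof.
  intros Ht. unfold dEQ. pose proof M_nonneg.
  assert (rsum N (fun i => rsum N (fun j => ip d (vsub (q i t) (q j t)) (vsub (Gv (p i t)) (Gv (p j t))))) <=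
     M * rsum N (fun i => rsum N (fun j => vnorm d (vsub (q i t) (q j t)) * vnorm d (vsub (p i t) (p j t))))).
  { rewrite <- rsum_scal. apply rsum_le; intros i Hi. rewrite <- rsum_scal. apply rsum_le; intros j Hj.
    eapply Rle_trans. apply CS. pose proof (vnorm_nonneg d (vsub (q i t) (q j t))).
    pose proof (G_lip_norm g g' d Hg0 Hgd Hgc P0M m M Hm Hb (p i t) (p j t) (MP t ltac:(lra) i Hi) (MP t ltac:(lra) j Hj)).
    unfold Gv. change (fun k => Gvel g d (p i t) k) with (Gvel g d (p i t)). change (fun k => Gvel g d (p j t) k) with (Gvel g d (p j t)). nra. }
  pose proof (double_CS N (fun i j => vnorm d (vsub (q i t) (q j t))) (fun i j => vnorm d (vsub (p i t) (p j t)))) as H1.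
  cbv beta in H1. rewrite (rsum_ext N (fun i => rsum N (fun j => vnorm d (vsub (q i t) (q j t)) ^ 2)) (fun i => rsum N (fun j => nsq d (vsub (q i t) (q j t))))) in H1
    by (intros; apply rsum_ext; intros; apply vnorm_sq).
  rewrite (rsum_ext N (fun i => rsum N (fun j => vnorm d (vsub (p i t) (p j t)) ^ 2)) (fun i => rsum N (fun j => nsq d (vsub (p i t) (p j t))))) in H1
    by (intros; apply rsum_ext; intros; apply vnorm_sq).
  fold (EQ t) (EP t) in H1.
  assert (M * rsum N (fun i => rsum N (fun j => vnorm d (vsub (q i t) (q j t)) * vnorm d (vsub (p i t) (p j t)))) <= M * (sqrt (EQ t) * sqrt (EP t))) by (apply Rmult_le_compat_l; auto).
  lra.
Qed.

Lemma dEP_bound2 t : 0 < t -> dEP t <= - 2 * kappa * m * psi (sqrt (EQ t)) * EP t.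
Proof. intros Ht. apply EP_dissip; auto. left; apply Hpp, sqrt_pos.
  intros i j Hi Hj. unfold w. apply psi_anti. apply sqrt_pos. rewrite vnorm_eq. apply sqrt_le_1_alt. apply EQ_term; auto. Qed.

Lemma M_pos : 0 < M.
Proof. assert (0 <= P0M) by apply rmax_nonneg. pose proof (Hb 0 ltac:(lra)). lra. Qed.

Definition cL := kappa * m / M.
Definition KL := kappa * m * Bp.
Definition Lyap eta s := sqrt (EP s + eta) + cL * Psi psi (sqrt (EQ s + eta)) - KL * sqrt eta * s.

Lemma Lyap_dec eta : 0 < eta -> forall t, 0 <= t -> Lyap eta t <= Lyap eta 0.
Proof.
  intros Heta t Ht. pose proof M_pos as HM.
  assert (HcL: 0 < cL) by (unfold cL; apply Rdiv_lt_0_compat; auto; apply Rmult_lt_0_compat; auto).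
  apply (mono_int 0 t (Lyap eta) (fun s => dEP s / (2 * sqrt (EP s + eta)) + cL * (dEQ s / (2 * sqrt (EQ s + eta)) * psit psi (sqrt (EQ s + eta))) - KL * sqrt eta)); try lra.
  - intros s Hs. unfold Lyap. apply (is_derive_minus (K:=R_AbsRing) (V:=R_NormedModule)); [|apply is_derive_lin].
    apply (is_derive_plus (K:=R_AbsRing) (V:=R_NormedModule)).
    + apply (sqrt_comp_derive (fun x => EP x + eta)). apply plus_const_derive. apply EP_derive; lra.
      pose proof (EP_nonneg s); lra.
    + apply is_derive_scal. apply (Psi_comp_derive (fun x => sqrt (EQ x + eta))).
      apply (sqrt_comp_derive (fun x => EQ x + eta)). apply plus_const_derive. apply EQ_derive; lra.
      pose proof (EQ_nonneg s); lra.
  - intros s Hs.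
    pose proof (EP_nonneg s) as HP. pose proof (EQ_nonneg s) as HQ.
    pose proof (dEP_bound2 s ltac:(lra)) as B1. pose proof (dEQ_bound s ltac:(lra)) as B2.
    set (P := EP s) in *. set (Q := EQ s) in *.
    set (rP := sqrt P). set (rQ := sqrt Q). set (sP := sqrt (P + eta)). set (sQ := sqrt (Q + eta)).
    set (e := sqrt eta). fold rP rQ in B1, B2.
    assert (HrP: 0 <= rP) by apply sqrt_pos. assert (HrQ: 0 <= rQ) by apply sqrt_pos.
    assert (HsP: 0 < sP) by (apply sqrt_lt_R0; lra). assert (HsQ: 0 < sQ) by (apply sqrt_lt_R0; lra).
    assert (He: 0 <= e) by apply sqrt_pos.
    assert (rP2: rP * rP = P) by (apply sqrt_sqrt; auto). assert (sP2: sP * sP = P + eta) by (apply sqrt_sqrt; lra).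
    assert (e2: e * e = eta) by (apply sqrt_sqrt; lra).
    assert (rPsP: rP <= sP) by (apply sqrt_le_1_alt; lra). assert (rQsQ: rQ <= sQ) by (apply sqrt_le_1_alt; lra).
    assert (dsP: sP - rP <= e) by nra.
    set (psi0 := psi rQ). assert (Hp0: 0 < psi0) by (apply Hpp; auto). assert (Hp0B: psi0 <= Bp) by (apply HBp; auto).
    set (pt := psit psi sQ). assert (Hpt: 0 < pt) by (eapply psit_pos; eauto).
    assert (Hpt2: pt <= psi0) by (unfold pt, psi0; rewrite (psit_eq psi); [apply psi_anti| ]; lra).
    assert (T1: dEP s / (2 * sP) <= - (kappa * m * psi0) * (P / sP)).
    { unfold Rdiv. replace (- (kappa * m * psi0) * (P * / sP)) with ((- 2 * kappa * m * psi0 * P) * / (2 * sP)) by (field; lra).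
      apply Rmult_le_compat_r; auto. left; apply Rinv_0_lt_compat; lra. }
    assert (T2: dEQ s / (2 * sQ) * pt <= M * rP * pt).
    { apply Rmult_le_compat_r; [lra|]. unfold Rdiv.
      apply Rle_trans with ((2 * M * rQ * rP) * / (2 * sQ)). apply Rmult_le_compat_r; auto. left; apply Rinv_0_lt_compat; lra.
      replace (2 * M * rQ * rP * / (2 * sQ)) with ((M * rP) * (rQ / sQ)) by (field; lra).
      assert (rQ / sQ <= 1). { unfold Rdiv. replace 1 with (sQ * / sQ) by (field; lra). apply Rmult_le_compat_r; auto. left; apply Rinv_0_lt_compat; lra. }
      assert (0 <= M * rP) by nra. nra. }
    assert (T3: cL * (dEQ s / (2 * sQ) * pt) <= kappa * m * psi0 * rP).
    { apply Rle_trans with (cL * (M * rP * pt)). apply Rmult_le_compat_l; lra.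
      replace (cL * (M * rP * pt)) with (kappa * m * rP * pt) by (unfold cL; field; lra).
      assert (0 <= kappa * m * rP) by (apply Rmult_le_pos; [nra| auto]). nra. }
    assert (T4: rP - P / sP <= e).
    { replace (rP - P / sP) with ((sP - rP) * (rP / sP)) by (rewrite <- rP2; field; lra).
      assert (rP / sP <= 1). { unfold Rdiv. replace 1 with (sP * / sP) by (field; lra). apply Rmult_le_compat_r; auto. left; apply Rinv_0_lt_compat; lra. }
      assert (0 <= rP / sP) by (unfold Rdiv; apply Rmult_le_pos; auto; left; apply Rinv_0_lt_compat; lra). nra. }
    assert (Hkm: 0 < kappa * m) by nra.
    assert (kappa * m * psi0 * (rP - P / sP) <= kappa * m * Bp * e).
    { apply Rle_trans with (kappa * m * psi0 * e). apply Rmult_le_compat_l; nra. apply Rmult_le_compat_r; auto. nra. }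
    unfold KL. fold e. lra.
  - unfold Lyap. apply fl_minus. apply fl_plus.
    + apply fl_cont. apply fl_plus. apply EP_fl. apply fl_const. apply continuous_sqrt.
    + apply fl_mult. apply fl_const. apply fl_cont. apply fl_cont. apply fl_plus. apply EQ_fl. apply fl_const. apply continuous_sqrt.
      eapply Psi_cont; eauto.
    + apply fl_mult. apply fl_const. apply fl_id_right.
Qed.

Lemma sqrt_add_le a e : 0 <= a -> 0 <= e -> sqrt (a + e) <= sqrt a + sqrt e.
Proof. intros Ha He. rewrite <- (sqrt_pow2 (sqrt a + sqrt e)) by (pose proof (sqrt_pos a); pose proof (sqrt_pos e); lra).
  apply sqrt_le_1_alt. replace ((sqrt a + sqrt e) ^ 2) with (sqrt a * sqrt a + sqrt e * sqrt e + 2 * sqrt a * sqrt e) by ring.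
  rewrite !sqrt_sqrt by auto. pose proof (sqrt_pos a); pose proof (sqrt_pos e). nra. Qed.

Lemma bounded_of_lyap : (exists X, 0 <= X /\ sqrt (EP 0) < cL * (Psi psi X - Psi psi (sqrt (EQ 0)))) -> spatially_bounded N d q.
Proof.
  intros [X [HX HXc]]. exists X. intros t Ht. pose proof M_pos as HM.
  assert (HcL: 0 < cL) by (unfold cL; apply Rdiv_lt_0_compat; auto; apply Rmult_lt_0_compat; auto).
  assert (HBp0: 0 < Bp) by (pose proof (Hpp 0 ltac:(lra)); pose proof (HBp 0 ltac:(lra)); lra).
  assert (HKL: 0 <= KL) by (unfold KL; pose proof (Rmult_lt_0_compat _ _ Hkap Hm); nra).
  assert (Key: cL * (Psi psi (sqrt (EQ t)) - Psi psi (sqrt (EQ 0))) <= sqrt (EP 0)).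
  { apply Rle_plus_epsilon. intros eps Heps.
    set (Z := 1 + cL * Bp + KL * t). assert (HZ: 0 < Z) by (unfold Z; nra).
    set (eta := (eps / Z) ^ 2). assert (Heta: 0 < eta) by (unfold eta; apply pow_lt; apply Rdiv_lt_0_compat; auto).
    assert (Hse: sqrt eta = eps / Z) by (unfold eta; apply sqrt_pow2; left; apply Rdiv_lt_0_compat; auto).
    pose proof (Lyap_dec eta Heta t Ht) as H. unfold Lyap in H. rewrite Rmult_0_r, Rminus_0_r in H.
    pose proof (EP_nonneg 0). pose proof (EQ_nonneg 0). pose proof (EQ_nonneg t).
    assert (A1: 0 <= sqrt (EP t + eta)) by apply sqrt_pos.
    assert (A2: Psi psi (sqrt (EQ t)) <= Psi psi (sqrt (EQ t + eta))).
    { eapply Psi_mono; eauto. apply sqrt_le_1_alt; lra. }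
    assert (A3: Psi psi (sqrt (EQ 0 + eta)) - Psi psi (sqrt (EQ 0)) <= Bp * sqrt eta).
    { eapply Rle_trans. eapply Psi_lip; eauto. apply sqrt_le_1_alt; lra.
      apply Rmult_le_compat_l; [lra|]. pose proof (sqrt_add_le (EQ 0) eta ltac:(lra) ltac:(lra)). lra. }
    assert (A4: sqrt (EP 0 + eta) <= sqrt (EP 0) + sqrt eta) by (apply sqrt_add_le; lra).
    assert (A5: sqrt eta * Z = eps) by (rewrite Hse; field; lra).
    assert (cL * Psi psi (sqrt (EQ t)) <= cL * Psi psi (sqrt (EQ t + eta))) by (apply Rmult_le_compat_l; lra).
    assert (cL * (Psi psi (sqrt (EQ 0 + eta)) - Psi psi (sqrt (EQ 0))) <= cL * (Bp * sqrt eta)) by (apply Rmult_le_compat_l; lra).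
    unfold Z in A5. nra. }
  eapply Rle_trans. apply (DQ_le_sqrt q t (EQ t)). intros; apply EQ_term; auto.
  destruct (Rle_dec (sqrt (EQ t)) X) as [|Hn]; auto. exfalso.
  assert (Psi psi X <= Psi psi (sqrt (EQ t))) by (eapply Psi_mono; eauto; lra).
  assert (cL * (Psi psi X - Psi psi (sqrt (EQ 0))) <= cL * (Psi psi (sqrt (EQ t)) - Psi psi (sqrt (EQ 0)))) by (apply Rmult_le_compat_l; lra).
  lra.
Qed.
End WithBounds.

Lemma exp_lim B C : 0 < C -> is_lim (fun t => B * exp (- C * t)) p_infty 0.
Proof.
  intros HC. apply (proj1 (is_lim_spec _ _ _)). intros eps. simpl.
  exists (ln ((Rabs B + 1) / eps) / C). intros t Ht.
  rewrite Rminus_0_r. rewrite Rabs_mult, (Rabs_right (exp _)) by (left; apply exp_pos).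
  assert (H1: ln ((Rabs B + 1) / eps) < C * t).
  { apply Rmult_lt_reg_r with (/ C). apply Rinv_0_lt_compat; auto. replace (C * t * / C) with t by (field; lra). auto. }
  assert (Hp: 0 < (Rabs B + 1) / eps) by (apply Rdiv_lt_0_compat; [pose proof (Rabs_pos B); lra| apply cond_pos]).
  apply exp_increasing in H1. rewrite exp_ln in H1 by auto.
  replace (- C * t) with (- (C * t)) by ring. rewrite exp_Ropp.
  pose proof (exp_pos (C * t)). pose proof (cond_pos eps). pose proof (Rabs_pos B).
  assert (Rabs B + 1 < eps * exp (C * t)).
  { replace (Rabs B + 1) with ((Rabs B + 1) / eps * eps) by (field; lra). nra. }
  apply Rmult_lt_reg_r with (exp (C * t)); auto.
  replace (Rabs B * / exp (C * t) * exp (C * t)) with (Rabs B) by (field; lra). lra.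
Qed.

Lemma DP_lim_of_exp_decay : exp_decay N d p -> is_lim (DQ N d p) p_infty 0.
Proof.
  intros [B [C [HB [HC Hdec]]]].
  apply (is_lim_le_le_loc (fun _ => 0) (fun t => B * exp (- C * t))).
  exists 0. intros t Ht. split. apply rmax_nonneg. apply Hdec; lra.
  apply is_lim_const. apply exp_lim; auto.
Qed.

Lemma part1 : ((flocking N d q p <-> exp_decay N d p) /\ (exp_decay N d p <-> spatially_bounded N d q)).
Proof. destruct (Hgb P0M (rmax_nonneg _ _)) as [m [M [Hm Hb]]]. split; split.
 - intros [Hs _]. eapply exp_decay_of_bounded; eauto.
 - intros He. split. eapply bounded_of_exp_decay; eauto. apply DP_lim_of_exp_decay; auto.
 - intros He. eapply bounded_of_exp_decay; eauto.
 - intros Hs. eapply exp_decay_of_bounded; eauto.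
Qed.

Lemma flock_of_bounded : spatially_bounded N d q -> flocking N d q p.
Proof. intros H. apply part1. apply part1. auto. Qed.

Lemma config_EP : config_norm N d (fun i => p i 0) = sqrt (EP 0).
Proof. unfold config_norm, EP. f_equal. apply rsum_ext; intros; apply rsum_ext; intros; apply vnorm_sq. Qed.
Lemma config_EQ : config_norm N d (fun i => q i 0) = sqrt (EQ 0).
Proof. unfold config_norm, EQ. f_equal. apply rsum_ext; intros; apply rsum_ext; intros; apply vnorm_sq. Qed.

Lemma part2_core m M : 0 < m -> (forall r, 0 <= r <= P0M -> m <= g' r <= M) ->
  (exists X, 0 <= X /\ sqrt (EP 0) < kappa * m / M * (Psi psi X - Psi psi (sqrt (EQ 0)))) -> flocking N d q p.
Proof. intros Hm Hb H. apply flock_of_bounded. eapply bounded_of_lyap; eauto. Qed.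

Lemma inf_sup : 0 < inf_on g' P0M /\ forall r, 0 <= r <= P0M -> inf_on g' P0M <= g' r <= sup_on g' P0M.
Proof.
  destruct (Hgb P0M (rmax_nonneg _ _)) as [m [M [Hm Hb]]].
  assert (H0: 0 <= P0M) by apply rmax_nonneg.
  set (E := fun y => exists r, 0 <= r <= P0M /\ y = g' r).
  destruct (Glb_Rbar_correct E) as [Hlb Hglb]. destruct (Lub_Rbar_correct E) as [Hub Hlub].
  assert (E0: E (g' 0)) by (exists 0; split; [lra| auto]).
  assert (Lm: Rbar_le m (Glb_Rbar E)). { apply Hglb. intros x [r [Hr ->]]. simpl. apply Hb; auto. }
  assert (LM: Rbar_le (Lub_Rbar E) M). { apply Hlub. intros x [r [Hr ->]]. simpl. apply Hb; auto. }
  pose proof (Hlb _ E0) as G1. pose proof (Hub _ E0) as G2.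
  unfold inf_on, sup_on. fold E.
  destruct (Glb_Rbar E) as [l| |] eqn:El; simpl in *; try contradiction.
  destruct (Lub_Rbar E) as [u| |] eqn:Eu; simpl in *; try contradiction.
  split. lra. intros r Hr. assert (E (g' r)) by (exists r; split; auto).
  pose proof (Hlb _ H). pose proof (Hub _ H). simpl in *. lra.
Qed.

Lemma lim_exceed (u : nat -> R) l (y c : R) : is_lim_seq u l -> 0 < c -> Rbar_lt y (Rbar_mult c l) -> exists n, y < c * u n.
Proof.
  intros Hl Hc Hy. apply is_lim_seq_spec in Hl. destruct l as [l| |]; simpl in Hy, Hl.
  - assert (He: 0 < (c * l - y) / (2 * c)) by (apply Rdiv_lt_0_compat; lra).
    destruct (Hl (mkposreal _ He)) as [n0 Hn0]. exists n0. specialize (Hn0 n0 (Nat.le_refl _)). simpl in Hn0.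
    apply Rabs_lt_between in Hn0. destruct Hn0 as [Hn0 _].
    assert (c * ((c * l - y) / (2 * c)) = (c * l - y) / 2) by (field; lra). nra.
  - destruct (Hl (y / c)) as [n0 Hn0]. exists n0. specialize (Hn0 n0 (Nat.le_refl _)).
    apply Rmult_lt_compat_l with (r := c) in Hn0; auto. replace (c * (y / c)) with y in Hn0 by (field; lra). auto.
  - destruct (Rle_dec 0 c); [destruct (Rle_lt_or_eq_dec 0 c r)|]; simpl in Hy; try contradiction; lra.
Qed.

Lemma Psi_incr (n : nat) : Psi psi (INR n) <= Psi psi (INR (S n)).
Proof. eapply Psi_mono; eauto. rewrite S_INR; lra. Qed.

Lemma improper_lim a : 0 <= a -> is_lim_seq (fun n => Psi psi (INR n) - Psi psi a) (improper_int psi a).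
Proof.
  intros Ha. unfold improper_int, Lim. simpl Rbar_loc_seq.
  rewrite (Lim_seq_ext _ (fun n => Psi psi (INR n) - Psi psi a)).
  apply Lim_seq_correct. apply ex_lim_seq_incr. intros n. pose proof (Psi_incr n). lra.
  intros n. rewrite (RInt_psi_psit psi a (INR n) Ha (pos_INR n)). symmetry. eapply Psi_diff; eauto.
Qed.

Lemma part2 : let P0M := rmax N (fun i => vnorm d (p i 0)) in
   let MG := sup_on g' P0M in
   let mG := inf_on g' P0M in
   let MM := Rmin mG (mG ^ 2 / MG) in
   Rbar_lt (config_norm N d (fun i => p i 0))
           (Rbar_mult (MM * kappa / MG) (improper_int psi (config_norm N d (fun i => q i 0)))) ->
   flocking N d q p.
Proof.
  intros P0' MG mG MM H. fold P0M in P0'. unfold P0' in *.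
  destruct inf_sup as [HmG Hb]. fold mG MG in HmG, Hb.
  assert (HMG: 0 < MG) by (assert (0 <= P0M) by apply rmax_nonneg; pose proof (Hb 0 ltac:(lra)); lra).
  assert (HMM: 0 < MM) by (unfold MM; apply Rmin_glb_lt; auto; apply Rdiv_lt_0_compat; auto; nra).
  assert (HMMm: MM <= mG) by (unfold MM; apply Rmin_l).
  rewrite config_EP, config_EQ in H.
  pose proof (improper_lim (sqrt (EQ 0)) (sqrt_pos _)) as Hl.
  assert (Hc: 0 < MM * kappa / MG) by (apply Rdiv_lt_0_compat; auto; nra).
  destruct (lim_exceed _ _ _ _ Hl Hc H) as [n Hn].
  apply (part2_core mG MG HmG Hb). exists (INR n). split. apply pos_INR.
  pose proof (sqrt_pos (EP 0)).
  set (un := Psi psi (INR n) - Psi psi (sqrt (EQ 0))) in *.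
  assert (0 < un) by (destruct (Rle_dec un 0); [|lra]; assert (MM * kappa / MG * un <= 0) by (apply Rmult_le_0_l; lra); lra).
  assert (MM * kappa / MG <= kappa * mG / MG).
  { unfold Rdiv. rewrite (Rmult_comm kappa mG). apply Rmult_le_compat_r. left; apply Rinv_0_lt_compat; auto. nra. }
  nra.
Qed.

Lemma part3 : improper_int psi 0 = p_infty -> flocking N d q p.
Proof.
  intros H. destruct (Hgb P0M (rmax_nonneg _ _)) as [m [M [Hm Hb]]].
  pose proof (improper_lim 0 ltac:(lra)) as Hl. rewrite H in Hl. apply is_lim_seq_spec in Hl. simpl in Hl.
  assert (HM: 0 < M) by (assert (0 <= P0M) by apply rmax_nonneg; pose proof (Hb 0 ltac:(lra)); lra).
  set (c := kappa * m / M). assert (Hc: 0 < c) by (unfold c; apply Rdiv_lt_0_compat; nra).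
  destruct (Hl (sqrt (EP 0) / c + Psi psi (sqrt (EQ 0)) - Psi psi 0)) as [n0 Hn0]. specialize (Hn0 n0 (Nat.le_refl _)).
  apply (part2_core m M Hm Hb). exists (INR n0). split. apply pos_INR. fold c.
  assert (sqrt (EP 0) / c < Psi psi (INR n0) - Psi psi (sqrt (EQ 0))) by lra.
  apply Rmult_lt_compat_l with (r := c) in H0; auto. replace (c * (sqrt (EP 0) / c)) with (sqrt (EP 0)) in H0 by (field; lra). auto.
Qed.

Lemma main_sec : ((flocking N d q p <-> exp_decay N d p) /\ (exp_decay N d p <-> spatially_bounded N d q)) /\
  (let P0M := rmax N (fun i => vnorm d (p i 0)) in
   let MG := sup_on g' P0M in
   let mG := inf_on g' P0M in
   let MM := Rmin mG (mG ^ 2 / MG) in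
   Rbar_lt (config_norm N d (fun i => p i 0))
           (Rbar_mult (MM * kappa / MG) (improper_int psi (config_norm N d (fun i => q i 0)))) ->
   flocking N d q p) /\
  (improper_int psi 0 = p_infty -> flocking N d q p).
Proof. split; [apply part1| split; [apply part2| apply part3]]. Qed.
End Dyn.

Theorem theorem2p1 (N d : nat) (kappa : R) (g g' psi : R -> R)
    (q p : nat -> R -> vec) :
  (1 <= N)%nat -> (1 <= d)%nat -> 0 < kappa ->
  velocity_control g g' -> comm_kernel psi ->
  CS_solution N d kappa g psi q p ->
  ((flocking N d q p <-> exp_decay N d p) /\
   (exp_decay N d p <-> spatially_bounded N d q)) /\
  (let P0M := rmax N (fun i => vnorm d (p i 0)) in
   let MG := sup_on g' P0M in
   let mG := inf_on g' P0M in
   let MM := Rmin mG (mG ^ 2 / MG) in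
   Rbar_lt (config_norm N d (fun i => p i 0))
           (Rbar_mult (MM * kappa / MG) (improper_int psi (config_norm N d (fun i => q i 0)))) ->
   flocking N d q p) /\
  (improper_int psi 0 = p_infty -> flocking N d q p).
Proof.
  intros HN Hd Hk Hvc Hck Hsol.
  destruct Hvc as [Hg0 [Hgd [Hgcont [Hgc [Hg'c [Hgb Hconv]]]]]].
  destruct Hck as [Hpp [[Bp HBp] [[Lp HL] Hpm]]].
  eapply main_sec; eauto.
Qed.
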